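(* Let $g\in C^0([0,\infty),H)$ and let $u$ be the weak solution on $[0,\infty)$ of $u''+2\delta u'+Au=g$ with data in $D(A^{1/2})\times H$. Define $$E(t)=|u'(t)|^2+|A^{1/2}u(t)|^2,\qquad \widehat E(t)=E(t)+2\mu\langle u'(t),Qu(t)\rangle,$$ and, for $d\ge0$ and $u(t)\ne0$, $$G_d(t)=\frac{E(t)}{|u(t)|^{2+d}},\qquad \widehat G_d(t)=\frac{\widehat E(t)}{|u(t)|^{2+d}}.$$ Then: (1) $\tfrac12E(t)\le\widehat E(t)\le 2E(t)$ for all $t\ge0$. Moreover, $\widehat E$ is of class $C^1$ on $[0,\infty)$ and $$\widehat E'(t)\le-\frac{\mu}{2}\widehat E(t)+\frac{2}{\delta}|g(t)|^2\quad\text{for all } t\ge0.$$ (2) Suppose $u(t)\ne0$ for all $t$ in an interval $(a,b)$, and let $d\ge0$. Then $\tfrac12G_d(t)\le\widehat G_d(t)\le2G_d(t)$ on $(a,b)$. Moreover, $\widehat G_d$ is of class $C^1$ on $(a,b)$ and $$\widehat G_d'(t)\le-\frac{\mu}{2}\widehat G_d(t)+\frac{2}{\delta}\frac{|g(t)|^2}{|u(t)|^{2+d}}+(2+d)|u(t)|^{d/2}[G_d(t)]^{1/2}\widehat G_d(t)\quad\text{for all } t\in(a,b).$$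
   Context: $H$ is a separable real Hilbert space with norm $|\cdot|$ and scalar product $\langle\cdot,\cdot\rangle$. $A$ is a self-adjoint nonnegative operator with dense domain, and $\delta>0$. Weak solutions of $u''+2\delta u'+Au=g$ lie in $C^0([0,\infty),D(A^{1/2}))\cap C^1([0,\infty),H)$. Their energy $E$ is $C^1$ with $E'=-4\delta|u'|^2+2\langle u',g\rangle$. $Q:H\to H$ denotes the orthogonal projection onto $\ker(A)^\perp$. The constant $\nu>0$ is such that $|Qu|^2\le\nu^{-1}|A^{1/2}u|^2$ for all $u\in D(A^{1/2})$. Under the spectral assumption that $\sigma(A)$ is a discrete set of eigenvalues without finite accumulation points, one can take $\nu$ to be the smallest positive eigenvalue of $A$, or any $\nu>0$ if $A=0$. The constant $\mu$ is $\mu:=\min\{\tfrac12,\tfrac{\nu}{2},\tfrac{\delta}{2},\tfrac{\nu}{5\delta}\}$. *)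

(* Defs.v *)
From Stdlib Require Import Reals.
Open Scope R_scope.

Record Hilbert := {
  hcar :> Type;
  h0 : hcar;
  hadd : hcar -> hcar -> hcar;
  hopp : hcar -> hcar;
  hscal : R -> hcar -> hcar;
  hinner : hcar -> hcar -> R;
  haddA : forall x y z, hadd x (hadd y z) = hadd (hadd x y) z;
  haddC : forall x y, hadd x y = hadd y x;
  hadd0 : forall x, hadd x h0 = x;
  haddN : forall x, hadd x (hopp x) = h0;
  hscal1 : forall x, hscal 1 x = x;
  hscalA : forall a b x, hscal a (hscal b x) = hscal (a * b) x;
  hscalDr : forall a x y, hscal a (hadd x y) = hadd (hscal a x) (hscal a y);
  hscalDl : forall a b x, hscal (a + b) x = hadd (hscal a x) (hscal b x);
  hinner_sym : forall x y, hinner x y = hinner y x;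
  hinner_addl : forall x y z, hinner (hadd x y) z = hinner x z + hinner y z;
  hinner_scall : forall a x y, hinner (hscal a x) y = a * hinner x y;
  hinner_pos : forall x, 0 <= hinner x x;
  hinner_def : forall x, hinner x x = 0 -> x = h0;
  hcomplete : forall s : nat -> hcar,
    (forall eps, eps > 0 -> exists N, forall m n, (m >= N)%nat -> (n >= N)%nat ->
        sqrt (hinner (hadd (s m) (hopp (s n))) (hadd (s m) (hopp (s n)))) < eps) ->
    exists l, forall eps, eps > 0 -> exists N, forall n, (n >= N)%nat ->
        sqrt (hinner (hadd (s n) (hopp l)) (hadd (s n) (hopp l))) < eps;
  hseparable : exists d : nat -> hcar, forall x eps, eps > 0 -> exists n,
        sqrt (hinner (hadd x (hopp (d n))) (hadd x (hopp (d n)))) < eps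
}.

Section HDefs.
Variable H : Hilbert.

Definition hsub (x y : H) : H := hadd H x (hopp H y).
Definition inner (x y : H) : R := hinner H x y.
Definition hnorm (x : H) : R := sqrt (inner x x).

Definition is_subspace (D : H -> Prop) : Prop :=
  D (h0 H) /\ (forall x y, D x -> D y -> D (hadd H x y)) /\
  (forall a x, D x -> D (hscal H a x)).

Definition is_linear_op (D : H -> Prop) (T : H -> H) : Prop :=
  is_subspace D /\
  (forall x y, D x -> D y -> T (hadd H x y) = hadd H (T x) (T y)) /\
  (forall a x, D x -> T (hscal H a x) = hscal H a (T x)).

Definition dense_domain (D : H -> Prop) : Prop :=
  forall x eps, eps > 0 -> exists y, D y /\ hnorm (hsub x y) < eps.

(** self-adjoint: D(T^* ) = D(T) and T^* = T, where
    y in D(T^* ) with T^* y = w  iff  <Tx,y> = <x,w> for all x in D(T). *)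
Definition self_adjoint (D : H -> Prop) (T : H -> H) : Prop :=
  forall y w, (forall x, D x -> inner (T x) y = inner x w) <-> (D y /\ w = T y).

Definition nonnegative_op (D : H -> Prop) (T : H -> H) : Prop :=
  forall x, D x -> 0 <= inner (T x) x.

Definition sa_nonneg_op (D : H -> Prop) (T : H -> H) : Prop :=
  is_linear_op D T /\ dense_domain D /\ self_adjoint D T /\ nonnegative_op D T.

(** (DB,B) is the nonnegative self-adjoint square root A^{1/2} of (DA,A):
    B is self-adjoint nonnegative and B o B = A, with
    D(A) = { x in D(B) | B x in D(B) }. *)
Definition is_sqrt_op (DA : H -> Prop) (A : H -> H) (DB : H -> Prop) (B : H -> H)
  : Prop :=
  sa_nonneg_op DB B /\
  (forall x, DA x <-> (DB x /\ DB (B x))) /\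
  (forall x, DA x -> A x = B (B x)).

Definition kerA (DA : H -> Prop) (A : H -> H) (x : H) : Prop := DA x /\ A x = h0 H.

Definition orth (M : H -> Prop) (y : H) : Prop := forall x, M x -> inner x y = 0.

Definition is_orth_proj (M : H -> Prop) (Q : H -> H) : Prop :=
  forall x, M (Q x) /\ (forall y, M y -> inner (hsub x (Q x)) y = 0).

Definition half_line (t : R) : Prop := 0 <= t.

Definition hcont_on (S : R -> Prop) (f : R -> H) : Prop :=
  forall t, S t -> forall eps, eps > 0 -> exists eta, eta > 0 /\
    forall s, S s -> Rabs (s - t) < eta -> hnorm (hsub (f s) (f t)) < eps.

Definition hderiv_on (S : R -> Prop) (f f' : R -> H) : Prop :=
  forall t, S t -> forall eps, eps > 0 -> exists eta, eta > 0 /\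
    forall s, S s -> Rabs (s - t) < eta ->
      hnorm (hsub (hsub (f s) (f t)) (hscal H (s - t) (f' t))) <= eps * Rabs (s - t).

End HDefs.

Definition rcont_on (S : R -> Prop) (f : R -> R) : Prop :=
  forall t, S t -> forall eps, eps > 0 -> exists eta, eta > 0 /\
    forall s, S s -> Rabs (s - t) < eta -> Rabs (f s - f t) < eps.

Definition rderiv_on (S : R -> Prop) (f f' : R -> R) : Prop :=
  forall t, S t -> forall eps, eps > 0 -> exists eta, eta > 0 /\
    forall s, S s -> Rabs (s - t) < eta ->
      Rabs (f s - f t - (s - t) * f' t) <= eps * Rabs (s - t).

Definition C1_on (S : R -> Prop) (f f' : R -> R) : Prop :=
  rderiv_on S f f' /\ rcont_on S f'.

(** * Weak solutions of u'' + 2 delta u' + A u = g on [0,oo)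
    (B = A^{1/2} with domain DB):
    u in C^0([0,oo), D(A^{1/2})) /\ C^1([0,oo), H), with derivative u', and
    for every v in D(A^{1/2}), t |-> <u'(t),v> is differentiable on [0,oo) with
    d/dt <u',v> + 2 delta <u',v> + <A^{1/2}u, A^{1/2}v> = <g,v>. *)
Definition weak_solution (H : Hilbert) (DB : H -> Prop) (B : H -> H) (delta : R)
  (g u u' : R -> H) : Prop :=
  (forall t, half_line t -> DB (u t)) /\
  hcont_on H half_line u /\
  hcont_on H half_line (fun t => B (u t)) /\
  hderiv_on H half_line u u' /\
  hcont_on H half_line u' /\
  (forall v, DB v ->
     rderiv_on half_line (fun t => inner H (u' t) v)
       (fun t => inner H (g t) v - 2 * delta * inner H (u' t) v
                 - inner H (B (u t)) (B v))).

Definition energy (H : Hilbert) (B : H -> H) (u u' : R -> H) (t : R) : R :=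
  hnorm H (u' t) ^ 2 + hnorm H (B (u t)) ^ 2.

Definition energy_hat (H : Hilbert) (B Q : H -> H) (mu : R) (u u' : R -> H) (t : R)
  : R := energy H B u u' t + 2 * mu * inner H (u' t) (Q (u t)).

Definition Gd (H : Hilbert) (B : H -> H) (d : R) (u u' : R -> H) (t : R) : R :=
  energy H B u u' t / Rpower (hnorm H (u t)) (2 + d).

Definition Gd_hat (H : Hilbert) (B Q : H -> H) (mu d : R) (u u' : R -> H) (t : R)
  : R := energy_hat H B Q mu u u' t / Rpower (hnorm H (u t)) (2 + d).

Definition mu_const (nu delta : R) : R :=
  Rmin (Rmin (1/2) (nu / 2)) (Rmin (delta / 2) (nu / (5 * delta))).

(** open interval (a,b), b = None meaning b = +oo *)
Definition in_interval (a : R) (b : option R) (t : R) : Prop :=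
  a < t /\ match b with Some b' => t < b' | None => True end.

(* Main.v *)
Require Import Defs.
From Stdlib Require Import Reals Lra Psatz.
Open Scope R_scope.

Lemma ip_sym (H : Hilbert) x y : inner H x y = inner H y x.
Proof. apply hinner_sym. Qed.
Lemma ip_addl (H : Hilbert) x y z : inner H (hadd H x y) z = inner H x z + inner H y z.
Proof. apply hinner_addl. Qed.
Lemma ip_addr (H : Hilbert) x y z : inner H z (hadd H x y) = inner H z x + inner H z y.
Proof. unfold inner. rewrite !(hinner_sym H z). apply hinner_addl. Qed.
Lemma ip_scall (H : Hilbert) a x y : inner H (hscal H a x) y = a * inner H x y.
Proof. apply hinner_scall. Qed.
Lemma ip_scalr (H : Hilbert) a x y : inner H y (hscal H a x) = a * inner H y x.
Proof. unfold inner. rewrite !(hinner_sym H y). apply hinner_scall. Qed.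
Lemma ip_0l (H : Hilbert) y : inner H (h0 H) y = 0.
Proof.
  assert (E := ip_addl H (h0 H) (h0 H) y). rewrite hadd0 in E. lra.
Qed.
Lemma ip_0r (H : Hilbert) y : inner H y (h0 H) = 0.
Proof. rewrite ip_sym. apply ip_0l. Qed.
Lemma ip_oppl (H : Hilbert) x y : inner H (hopp H x) y = - inner H x y.
Proof.
  assert (E := ip_addl H x (hopp H x) y). rewrite haddN, ip_0l in E. lra.
Qed.
Lemma ip_oppr (H : Hilbert) x y : inner H y (hopp H x) = - inner H y x.
Proof. rewrite !(ip_sym H y). apply ip_oppl. Qed.
Lemma ip_subl (H : Hilbert) x y z : inner H (hsub H x y) z = inner H x z - inner H y z.
Proof. unfold hsub. rewrite ip_addl, ip_oppl. ring. Qed.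
Lemma ip_subr (H : Hilbert) x y z : inner H z (hsub H x y) = inner H z x - inner H z y.
Proof. unfold hsub. rewrite ip_addr, ip_oppr. ring. Qed.
Lemma ip_pos (H : Hilbert) x : 0 <= inner H x x.
Proof. apply hinner_pos. Qed.

Lemma hscal0 (H : Hilbert) x : hscal H 0 x = h0 H.
Proof.
  assert (E : hscal H 0 x = hadd H (hscal H 0 x) (hscal H 0 x)).
  { rewrite <- hscalDl. f_equal. ring. }
  assert (E2 := f_equal (fun y => hadd H y (hopp H (hscal H 0 x))) E). simpl in E2.
  rewrite haddN, <- haddA, haddN, hadd0 in E2. auto.
Qed.
Lemma hopp_scal (H : Hilbert) x : hopp H x = hscal H (-1) x.
Proof.
  transitivity (hadd H (hadd H x (hscal H (-1) x)) (hopp H x)).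
  - rewrite <- (hscal1 H x) at 2. rewrite <- hscalDl.
    replace (1 + -1) with 0 by ring. rewrite hscal0.
    rewrite haddC, hadd0. auto.
  - rewrite (haddC H x), <- haddA, haddN, hadd0. auto.
Qed.

Lemma hnorm_ge0 (H : Hilbert) x : 0 <= hnorm H x.
Proof. apply sqrt_pos. Qed.
Lemma hnorm_sq (H : Hilbert) x : hnorm H x ^ 2 = inner H x x.
Proof. unfold hnorm. rewrite pow2_sqrt; auto. apply ip_pos. Qed.
Lemma hnorm_sqm (H : Hilbert) x : hnorm H x * hnorm H x = inner H x x.
Proof. rewrite <- hnorm_sq. ring. Qed.

Lemma quad_disc (A B C : R) : (forall t, 0 <= A + 2 * t * B + t * t * C) -> B * B <= A * C.
Proof.
  intro P. assert (HA : 0 <= A) by (specialize (P 0); lra).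
  assert (HC : 0 <= C).
  { destruct (Rle_dec 0 C); auto. exfalso.
    set (t := (A + 1) / (- C) + 1).
    assert (Hq : 0 <= (A + 1) / (- C)) by (apply Rmult_le_pos; [lra | left; apply Rinv_0_lt_compat; lra]).
    assert (Ht : 1 <= t) by (unfold t; lra).
    assert (Htc : t * (-C) >= A + 1).
    { unfold t. rewrite Rmult_plus_distr_r. unfold Rdiv. rewrite Rmult_assoc, Rinv_l by lra. lra. }
    pose proof (P t) as P1. pose proof (P (-t)) as P2.
    assert (t * t * (- C) >= t * (-C)) by nra.
    nra. }
  destruct (Req_dec C 0) as [C0|C0].
  - subst C. destruct (Req_dec B 0) as [B0|B0]. subst; lra.
    specialize (P (- (A + 1) / (2 * B))).
    replace (A + 2 * (- (A + 1) / (2 * B)) * B + - (A + 1) / (2 * B) * (- (A + 1) / (2 * B)) * 0)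
      with (-1) in P by (field; auto). lra.
  - specialize (P (- B / C)).
    replace (A + 2 * (- B / C) * B + - B / C * (- B / C) * C) with (A - B * B / C) in P by (field; auto).
    assert (HH : B * B / C <= A) by lra.
    apply (Rmult_le_compat_r C) in HH; auto. unfold Rdiv in HH. rewrite Rmult_assoc, Rinv_l in HH; lra.
Qed.

Lemma CS_sq (H : Hilbert) x y : inner H x y * inner H x y <= inner H x x * inner H y y.
Proof.
  apply quad_disc. intro t.
  assert (E := ip_pos H (hadd H x (hscal H t y))).
  rewrite ip_addl, !ip_addr, !ip_scall, !ip_scalr, (ip_sym H y x) in E. nra.
Qed.

Lemma CS (H : Hilbert) x y : Rabs (inner H x y) <= hnorm H x * hnorm H y.
Proof.
  assert (E : inner H x y * inner H x y <= (hnorm H x * hnorm H y) * (hnorm H x * hnorm H y)).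
  { replace (hnorm H x * hnorm H y * (hnorm H x * hnorm H y)) with
     ((hnorm H x * hnorm H x) * (hnorm H y * hnorm H y)) by ring.
    rewrite !hnorm_sqm. apply CS_sq. }
  pose proof (hnorm_ge0 H x). pose proof (hnorm_ge0 H y).
  assert (0 <= hnorm H x * hnorm H y) by nra.
  apply Rabs_le; split; nra.
Qed.

Lemma CS_le (H : Hilbert) x y : inner H x y <= hnorm H x * hnorm H y.
Proof. pose proof (CS H x y). pose proof (Rle_abs (inner H x y)). lra. Qed.
Lemma CS_ge (H : Hilbert) x y : - (hnorm H x * hnorm H y) <= inner H x y.
Proof. pose proof (CS H x y). pose proof (Rle_abs (- inner H x y)). rewrite Rabs_Ropp in H1. lra. Qed.

Lemma hnorm_le (H : Hilbert) x c : 0 <= c -> inner H x x <= c * c -> hnorm H x <= c.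
Proof.
  intros. unfold hnorm. rewrite <- (sqrt_square c) by auto. apply sqrt_le_1_alt. auto.
Qed.
Lemma hnorm_lt (H : Hilbert) x c : 0 <= c -> inner H x x < c * c -> hnorm H x < c.
Proof.
  intros. unfold hnorm. rewrite <- (sqrt_square c) by auto. apply sqrt_lt_1_alt. split; auto. apply ip_pos.
Qed.

Lemma dist_tri (H : Hilbert) x y z :
  hnorm H (hsub H x z) <= hnorm H (hsub H x y) + hnorm H (hsub H y z).
Proof.
  apply hnorm_le. pose proof (hnorm_ge0 H (hsub H x y)); pose proof (hnorm_ge0 H (hsub H y z)); lra.
  pose proof (CS_le H (hsub H x y) (hsub H y z)).
  pose proof (hnorm_sqm H (hsub H x y)). pose proof (hnorm_sqm H (hsub H y z)).
  rewrite !ip_subl, !ip_subr in *. rewrite (ip_sym H z x), (ip_sym H y x), (ip_sym H z y) in *.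
  nra.
Qed.
Lemma dist_sym (H : Hilbert) x y : hnorm H (hsub H x y) = hnorm H (hsub H y x).
Proof. unfold hnorm. f_equal. rewrite !ip_subl, !ip_subr. rewrite (ip_sym H x y). ring. Qed.

Lemma norm_tri_sub (H : Hilbert) x y : hnorm H x <= hnorm H y + hnorm H (hsub H x y).
Proof.
  apply hnorm_le. pose proof (hnorm_ge0 H y); pose proof (hnorm_ge0 H (hsub H x y)); lra.
  pose proof (CS_le H y (hsub H x y)).
  pose proof (hnorm_sqm H y). pose proof (hnorm_sqm H (hsub H x y)).
  rewrite !ip_subl, !ip_subr in *. rewrite (ip_sym H y x) in *. nra.
Qed.

Lemma ip_close (H : Hilbert) p q p0 q0 th :
  0 <= th <= 1 -> hnorm H (hsub H p p0) <= th -> hnorm H (hsub H q q0) <= th ->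
  Rabs (inner H p q - inner H p0 q0) <= th * (hnorm H p0 + hnorm H q0 + 1).
Proof.
  intros Hth Hp Hq.
  replace (inner H p q - inner H p0 q0) with
    (inner H (hsub H p p0) q + inner H p0 (hsub H q q0)) by (rewrite ip_subl, ip_subr; ring).
  eapply Rle_trans. apply Rabs_triang.
  pose proof (CS H (hsub H p p0) q). pose proof (CS H p0 (hsub H q q0)).
  pose proof (norm_tri_sub H q q0).
  pose proof (hnorm_ge0 H p0). pose proof (hnorm_ge0 H q0). pose proof (hnorm_ge0 H q).
  pose proof (hnorm_ge0 H (hsub H p p0)). pose proof (hnorm_ge0 H (hsub H q q0)).
  nra.
Qed.


Definition dR (S : R -> Prop) (f : R -> R) (df t : R) : Prop :=
  forall eps, eps > 0 -> exists eta, eta > 0 /\ forall s, S s -> Rabs (s - t) < eta ->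
     Rabs (f s - f t - (s - t) * df) <= eps * Rabs (s - t).
Definition cR (S : R -> Prop) (f : R -> R) (t : R) : Prop :=
  forall eps, eps > 0 -> exists eta, eta > 0 /\ forall s, S s -> Rabs (s - t) < eta ->
     Rabs (f s - f t) < eps.
Definition dH (H : Hilbert) (S : R -> Prop) (f : R -> H) (df : H) (t : R) : Prop :=
  forall eps, eps > 0 -> exists eta, eta > 0 /\ forall s, S s -> Rabs (s - t) < eta ->
     hnorm H (hsub H (hsub H (f s) (f t)) (hscal H (s - t) df)) <= eps * Rabs (s - t).
Definition cH (H : Hilbert) (S : R -> Prop) (f : R -> H) (t : R) : Prop :=
  forall eps, eps > 0 -> exists eta, eta > 0 /\ forall s, S s -> Rabs (s - t) < eta ->
     hnorm H (hsub H (f s) (f t)) < eps.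

Definition TT : R -> Prop := fun _ => True.

Lemma ltm_l x a b : x < Rmin a b -> x < a.
Proof. intros; eapply Rlt_le_trans; [eauto|apply Rmin_l]. Qed.
Lemma ltm_r x a b : x < Rmin a b -> x < b.
Proof. intros; eapply Rlt_le_trans; [eauto|apply Rmin_r]. Qed.


Lemma dR_cR S f df t : dR S f df t -> cR S f t.
Proof.
  intros D eps Heps. destruct (D 1 ltac:(lra)) as [eta [Heta P]].
  exists (Rmin eta (eps / (Rabs df + 2))). split.
  { apply Rmin_pos; auto. apply Rdiv_lt_0_compat; auto. pose proof (Rabs_pos df); lra. }
  intros s Ss Hs. assert (Hs1 : Rabs (s - t) < eta) by (eapply ltm_l; eauto).
  assert (Hs2 : Rabs (s - t) < eps / (Rabs df + 2)) by (eapply ltm_r; eauto).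
  specialize (P s Ss Hs1).
  replace (f s - f t) with ((f s - f t - (s - t) * df) + (s - t) * df) by ring.
  eapply Rle_lt_trans. apply Rabs_triang. rewrite Rabs_mult.
  assert (Rabs (s - t) * (Rabs df + 2) < eps).
  { apply (Rmult_lt_compat_r (Rabs df + 2)) in Hs2. unfold Rdiv in Hs2.
    rewrite Rmult_assoc, Rinv_l in Hs2. lra. pose proof (Rabs_pos df); lra. pose proof (Rabs_pos df); lra. }
  pose proof (Rabs_pos (s - t)). pose proof (Rabs_pos df). nra.
Qed.

Lemma dR_sub (S S' : R -> Prop) f df t : (forall x, S' x -> S x) -> dR S f df t -> dR S' f df t.
Proof. intros I D eps He. destruct (D eps He) as [eta [He' P]]. exists eta; split; auto. Qed.
Lemma cR_sub (S S' : R -> Prop) f t : (forall x, S' x -> S x) -> cR S f t -> cR S' f t.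
Proof. intros I D eps He. destruct (D eps He) as [eta [He' P]]. exists eta; split; auto. Qed.
Lemma dH_sub H (S S' : R -> Prop) f df t : (forall x, S' x -> S x) -> dH H S f df t -> dH H S' f df t.
Proof. intros I D eps He. destruct (D eps He) as [eta [He' P]]. exists eta; split; auto. Qed.
Lemma cH_sub H (S S' : R -> Prop) f t : (forall x, S' x -> S x) -> cH H S f t -> cH H S' f t.
Proof. intros I D eps He. destruct (D eps He) as [eta [He' P]]. exists eta; split; auto. Qed.

Definition nbhd (S : R -> Prop) (t : R) := exists r, r > 0 /\ forall s, Rabs (s - t) < r -> S s.

Lemma dR_loc S f df t : nbhd S t -> dR S f df t -> dR TT f df t.
Proof.
  intros [r [Hr Hn]] D eps He. destruct (D eps He) as [eta [He' P]].
  exists (Rmin eta r); split. apply Rmin_pos; auto.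
  intros s _ Hs. apply P. apply Hn. eapply ltm_r; eauto. eapply ltm_l; eauto.
Qed.
Lemma cR_loc S f t : nbhd S t -> cR S f t -> cR TT f t.
Proof.
  intros [r [Hr Hn]] D eps He. destruct (D eps He) as [eta [He' P]].
  exists (Rmin eta r); split. apply Rmin_pos; auto.
  intros s _ Hs. apply P. apply Hn. eapply ltm_r; eauto. eapply ltm_l; eauto.
Qed.
Lemma dH_loc H S f df t : nbhd S t -> dH H S f df t -> dH H TT f df t.
Proof.
  intros [r [Hr Hn]] D eps He. destruct (D eps He) as [eta [He' P]].
  exists (Rmin eta r); split. apply Rmin_pos; auto.
  intros s _ Hs. apply P. apply Hn. eapply ltm_r; eauto. eapply ltm_l; eauto.
Qed.
Lemma cH_loc H S f t : nbhd S t -> cH H S f t -> cH H TT f t.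
Proof.
  intros [r [Hr Hn]] D eps He. destruct (D eps He) as [eta [He' P]].
  exists (Rmin eta r); split. apply Rmin_pos; auto.
  intros s _ Hs. apply P. apply Hn. eapply ltm_r; eauto. eapply ltm_l; eauto.
Qed.

Lemma nbhd_half t : 0 < t -> nbhd half_line t.
Proof.
  intros Ht. exists t; split; auto. intros s Hs. unfold half_line.
  apply Rabs_def2 in Hs. lra.
Qed.

Lemma dR_shift f df t h : dR TT f df (t + h) -> dR TT (fun r => f (r + h)) df t.
Proof.
  intros D eps He. destruct (D eps He) as [eta [He' P]]. exists eta; split; auto.
  intros s _ Hs. replace (s - t) with (s + h - (t + h)) in * by ring. apply P; auto. exact I.
Qed.
Lemma cR_shift f t h : cR TT f (t + h) -> cR TT (fun r => f (r + h)) t.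
Proof.
  intros D eps He. destruct (D eps He) as [eta [He' P]]. exists eta; split; auto.
  intros s _ Hs. replace (s - t) with (s + h - (t + h)) in * by ring. apply P; auto. exact I.
Qed.
Lemma dH_shift H f df t h : dH H TT f df (t + h) -> dH H TT (fun r => f (r + h)) df t.
Proof.
  intros D eps He. destruct (D eps He) as [eta [He' P]]. exists eta; split; auto.
  intros s _ Hs. replace (s - t) with (s + h - (t + h)) in * by ring. apply P; auto. exact I.
Qed.
Lemma cH_shift H f t h : cH H TT f (t + h) -> cH H TT (fun r => f (r + h)) t.
Proof.
  intros D eps He. destruct (D eps He) as [eta [He' P]]. exists eta; split; auto.
  intros s _ Hs. replace (s - t) with (s + h - (t + h)) in * by ring. apply P; auto. exact I.
Qed.

Lemma dR_ext S f g df t : (forall s, S s -> f s = g s) -> S t -> dR S f df t -> dR S g df t.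
Proof.
  intros E St D eps He. destruct (D eps He) as [eta [He' P]]. exists eta; split; auto.
  intros s Ss Hs. rewrite <- !E; auto.
Qed.
Lemma cR_ext S f g t : (forall s, S s -> f s = g s) -> S t -> cR S f t -> cR S g t.
Proof.
  intros E St D eps He. destruct (D eps He) as [eta [He' P]]. exists eta; split; auto.
  intros s Ss Hs. rewrite <- !E; auto.
Qed.

Lemma dR_plus S f g df dg t : dR S f df t -> dR S g dg t -> dR S (fun r => f r + g r) (df + dg) t.
Proof.
  intros Df Dg eps He. destruct (Df (eps/2) ltac:(lra)) as [e1 [He1 P1]].
  destruct (Dg (eps/2) ltac:(lra)) as [e2 [He2 P2]].
  exists (Rmin e1 e2); split. apply Rmin_pos; auto.
  intros s Ss Hs. specialize (P1 s Ss ltac:(eapply ltm_l; eauto)).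
  specialize (P2 s Ss ltac:(eapply ltm_r; eauto)).
  replace (f s + g s - (f t + g t) - (s - t) * (df + dg)) with
   ((f s - f t - (s - t) * df) + (g s - g t - (s - t) * dg)) by ring.
  eapply Rle_trans. apply Rabs_triang. lra.
Qed.
Lemma dR_scal S f df c t : dR S f df t -> dR S (fun r => c * f r) (c * df) t.
Proof.
  intros Df eps He. destruct (Df (eps / (Rabs c + 1))) as [e1 [He1 P1]].
  { apply Rdiv_lt_0_compat; auto. pose proof (Rabs_pos c); lra. }
  exists e1; split; auto. intros s Ss Hs. specialize (P1 s Ss Hs).
  replace (c * f s - c * f t - (s - t) * (c * df)) with (c * (f s - f t - (s - t) * df)) by ring.
  rewrite Rabs_mult.
  assert (Rabs c * (eps / (Rabs c + 1) * Rabs (s - t)) <= eps * Rabs (s - t)).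
  { unfold Rdiv. pose proof (Rabs_pos c). pose proof (Rabs_pos (s - t)).
    assert (Rabs c * / (Rabs c + 1) <= 1).
    { apply (Rmult_le_reg_r (Rabs c + 1)). lra. rewrite Rmult_assoc, Rinv_l by lra. lra. }
    assert (0 <= eps * Rabs (s - t)) by nra.
    replace (Rabs c * (eps * / (Rabs c + 1) * Rabs (s - t))) with ((Rabs c * / (Rabs c + 1)) * (eps * Rabs (s - t))) by ring.
    nra. }
  eapply Rle_trans; [|eauto]. apply Rmult_le_compat_l; auto. apply Rabs_pos.
Qed.
Lemma dR_const S c t : dR S (fun _ => c) 0 t.
Proof.
  intros eps He. exists 1; split; [lra|]. intros. replace (c - c - (s - t) * 0) with 0 by ring.
  rewrite Rabs_R0. pose proof (Rabs_pos (s - t)). nra.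
Qed.

Lemma lim_to_eps f y l : derivable_pt_lim f y l ->
  forall eps, eps > 0 -> exists d, d > 0 /\ forall z, Rabs (z - y) < d ->
     Rabs (f z - f y - (z - y) * l) <= eps * Rabs (z - y).
Proof.
  intros D eps He. destruct (D eps He) as [[d Hd] P]. exists d; split; auto.
  intros z Hz. destruct (Req_dec z y) as [E|E].
  - subst. replace (f y - f y - (y - y) * l) with 0 by ring. rewrite Rabs_R0.
    pose proof (Rabs_pos (y - y)). nra.
  - specialize (P (z - y) ltac:(lra) Hz). simpl in P.
    replace (y + (z - y)) with z in P by ring.
    replace (f z - f y - (z - y) * l) with (((f z - f y) / (z - y) - l) * (z - y)) by (field; lra).
    rewrite Rabs_mult. apply Rmult_le_compat_r. apply Rabs_pos. lra.
Qed.

Lemma dR_to_lim f df t : dR TT f df t -> derivable_pt_lim f t df.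
Proof.
  intros D eps He. destruct (D (eps/2) ltac:(lra)) as [eta [Heta P]].
  exists (mkposreal eta Heta). intros h Hh Hhe. simpl in Hhe.
  specialize (P (t + h) I). replace (t + h - t) with h in P by ring. specialize (P Hhe).
  replace ((f (t + h) - f t) / h - df) with ((f (t + h) - f t - h * df) / h) by (field; auto).
  unfold Rdiv. rewrite Rabs_mult, Rabs_inv.
  assert (0 < Rabs h) by (apply Rabs_pos_lt; auto).
  apply (Rmult_le_compat_r (/ Rabs h)) in P. 2: { left; apply Rinv_0_lt_compat; auto. }
  rewrite Rmult_assoc, Rinv_r in P by lra. lra.
Qed.

Lemma lim_to_dR f df t : derivable_pt_lim f t df -> dR TT f df t.
Proof.
  intros D eps He. destruct (lim_to_eps f t df D eps He) as [d [Hd P]].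
  exists d; split; auto.
Qed.

Lemma dR_comp S f df t phi l : dR S f df t -> derivable_pt_lim phi (f t) l ->
  dR S (fun r => phi (f r)) (l * df) t.
Proof.
  intros D L eps He.
  set (K := Rabs df + 1). assert (HK : K > 0) by (unfold K; pose proof (Rabs_pos df); lra).
  destruct (lim_to_eps phi (f t) l L (eps / (2 * K))) as [d [Hd P1]].
  { apply Rdiv_lt_0_compat; lra. }
  destruct (D 1 ltac:(lra)) as [e1 [He1 Q1]].
  destruct (D (eps / (2 * (Rabs l + 1)))) as [e2 [He2 Q2]].
  { apply Rdiv_lt_0_compat; auto. pose proof (Rabs_pos l); lra. }
  exists (Rmin (Rmin e1 e2) (d / K)); split.
  { apply Rmin_pos; [apply Rmin_pos|apply Rdiv_lt_0_compat]; auto. }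
  intros s Ss Hs.
  assert (Hs1 : Rabs (s - t) < e1) by (eapply ltm_l, ltm_l; eauto).
  assert (Hs2 : Rabs (s - t) < e2) by (eapply ltm_r, ltm_l; eauto).
  assert (Hs3 : Rabs (s - t) < d / K) by (eapply ltm_r; eauto).
  specialize (Q1 s Ss Hs1). specialize (Q2 s Ss Hs2).
  assert (Hf : Rabs (f s - f t) <= K * Rabs (s - t)).
  { replace (f s - f t) with ((f s - f t - (s - t) * df) + (s - t) * df) by ring.
    eapply Rle_trans. apply Rabs_triang. rewrite Rabs_mult. unfold K. nra. }
  assert (Hfd : Rabs (f s - f t) < d).
  { apply (Rmult_lt_compat_l K) in Hs3; auto. unfold Rdiv in Hs3.
    rewrite <- Rmult_assoc, (Rmult_comm K d), Rmult_assoc, Rinv_r in Hs3 by lra. lra. }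
  specialize (P1 (f s) Hfd).
  replace (phi (f s) - phi (f t) - (s - t) * (l * df)) with
    ((phi (f s) - phi (f t) - (f s - f t) * l) + l * (f s - f t - (s - t) * df)) by ring.
  eapply Rle_trans. apply Rabs_triang. rewrite Rabs_mult.
  assert (A1 : eps / (2 * K) * Rabs (f s - f t) <= eps / 2 * Rabs (s - t)).
  { replace (eps / 2 * Rabs (s - t)) with (eps / (2 * K) * (K * Rabs (s - t))) by (field; lra).
    apply Rmult_le_compat_l; auto. left; apply Rdiv_lt_0_compat; lra. }
  assert (A2 : Rabs l * (eps / (2 * (Rabs l + 1)) * Rabs (s - t)) <= eps / 2 * Rabs (s - t)).
  { pose proof (Rabs_pos l). pose proof (Rabs_pos (s - t)).
    replace (Rabs l * (eps / (2 * (Rabs l + 1)) * Rabs (s - t))) with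
       ((Rabs l / (Rabs l + 1)) * (eps / 2 * Rabs (s - t))) by (field; lra).
    assert (Rabs l / (Rabs l + 1) <= 1).
    { apply (Rmult_le_reg_r (Rabs l + 1)). lra. unfold Rdiv. rewrite Rmult_assoc, Rinv_l by lra. lra. }
    assert (0 <= eps / 2 * Rabs (s - t)) by nra. nra. }
  assert (Rabs l * Rabs (f s - f t - (s - t) * df) <= Rabs l * (eps / (2 * (Rabs l + 1)) * Rabs (s - t))).
  { apply Rmult_le_compat_l; auto. apply Rabs_pos. }
  lra.
Qed.

Lemma dR_mult S f g df dg t : dR S f df t -> dR S g dg t -> dR S (fun r => f r * g r) (df * g t + f t * dg) t.
Proof.
  intros Df Dg eps He.
  destruct (dR_cR S g dg t Dg 1 ltac:(lra)) as [e0 [He0 C0]].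
  set (K := Rabs (g t) + 1 + Rabs (f t) + Rabs df).
  assert (HK : K > 0) by (unfold K; pose proof (Rabs_pos (g t)); pose proof (Rabs_pos (f t)); pose proof (Rabs_pos df); lra).
  destruct (Df (eps / (3 * K))) as [e1 [He1 P1]]. apply Rdiv_lt_0_compat; lra.
  destruct (Dg (eps / (3 * K))) as [e2 [He2 P2]]. apply Rdiv_lt_0_compat; lra.
  destruct (dR_cR S g dg t Dg (eps / (3 * K))) as [e3 [He3 P3]]. apply Rdiv_lt_0_compat; lra.
  exists (Rmin (Rmin e0 e1) (Rmin e2 e3)); split.
  { repeat apply Rmin_pos; auto. }
  intros s Ss Hs.
  assert (Hs0 : Rabs (s - t) < e0) by (eapply ltm_l, ltm_l; eauto).
  assert (Hs1 : Rabs (s - t) < e1) by (eapply ltm_r, ltm_l; eauto).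
  assert (Hs2 : Rabs (s - t) < e2) by (eapply ltm_l, ltm_r; eauto).
  assert (Hs3 : Rabs (s - t) < e3) by (eapply ltm_r, ltm_r; eauto).
  specialize (C0 s Ss Hs0). specialize (P1 s Ss Hs1). specialize (P2 s Ss Hs2). specialize (P3 s Ss Hs3).
  replace (f s * g s - f t * g t - (s - t) * (df * g t + f t * dg)) with
    ((f s - f t - (s - t) * df) * g s + f t * (g s - g t - (s - t) * dg) + (s - t) * df * (g s - g t)) by ring.
  assert (Hgs : Rabs (g s) <= Rabs (g t) + 1).
  { replace (g s) with (g t + (g s - g t)) by ring. eapply Rle_trans. apply Rabs_triang. lra. }
  pose proof (Rabs_pos (g s)). pose proof (Rabs_pos (f t)). pose proof (Rabs_pos df). pose proof (Rabs_pos (s - t)).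
  pose proof (Rabs_pos (g s - g t)). pose proof (Rabs_pos (g t)).
  set (q := eps / (3 * K)) in *.
  assert (Hq : q * K = eps / 3) by (unfold q; field; lra).
  eapply Rle_trans. apply Rabs_triang. eapply Rle_trans. apply Rplus_le_compat_r. apply Rabs_triang.
  rewrite !Rabs_mult.
  assert (T1 : Rabs (f s - f t - (s - t) * df) * Rabs (g s) <= q * Rabs (s - t) * K).
  { apply Rmult_le_compat; auto. apply Rabs_pos. unfold K; lra. }
  assert (T2 : Rabs (f t) * Rabs (g s - g t - (s - t) * dg) <= K * (q * Rabs (s - t))).
  { apply Rmult_le_compat; [apply Rabs_pos|apply Rabs_pos|unfold K; lra|auto]. }
  assert (T3 : Rabs (s - t) * Rabs df * Rabs (g s - g t) <= Rabs (s - t) * K * q).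
  { apply Rmult_le_compat; auto. apply Rmult_le_pos; auto. apply Rmult_le_compat_l; auto. unfold K; lra. lra. }
  assert (E3 : q * Rabs (s - t) * K + K * (q * Rabs (s - t)) + Rabs (s - t) * K * q = eps * Rabs (s - t)).
  { replace (q * Rabs (s - t) * K + K * (q * Rabs (s - t)) + Rabs (s - t) * K * q) with (3 * (q * K) * Rabs (s - t)) by ring.
    rewrite Hq. field. }
  lra.
Qed.


Lemma ip_comb (H : Hilbert) a b c e X :
  inner H (hsub H (hsub H a b) (hscal H c e)) X = inner H a X - inner H b X - c * inner H e X.
Proof. rewrite !ip_subl, ip_scall. ring. Qed.

Lemma hnorm_scal (H : Hilbert) c x : hnorm H (hscal H c x) = Rabs c * hnorm H x.
Proof.
  unfold hnorm. rewrite ip_scall, ip_scalr, <- Rmult_assoc, sqrt_mult_alt.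
  f_equal. apply sqrt_Rsqr_abs. apply Rle_0_sqr.
Qed.

Lemma dH_ip (H : Hilbert) S f df t X : dH H S f df t -> dR S (fun r => inner H (f r) X) (inner H df X) t.
Proof.
  intros D eps He. destruct (D (eps / (hnorm H X + 1))) as [eta [Heta P]].
  { apply Rdiv_lt_0_compat; auto. pose proof (hnorm_ge0 H X); lra. }
  exists eta; split; auto. intros s Ss Hs. specialize (P s Ss Hs).
  rewrite <- ip_comb. eapply Rle_trans. apply CS.
  pose proof (hnorm_ge0 H X). pose proof (Rabs_pos (s - t)).
  rewrite Rmult_comm. eapply Rle_trans. apply Rmult_le_compat_l; eauto.
  replace (hnorm H X * (eps / (hnorm H X + 1) * Rabs (s - t))) with
    ((hnorm H X / (hnorm H X + 1)) * (eps * Rabs (s - t))) by (field; lra).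
  assert (hnorm H X / (hnorm H X + 1) <= 1).
  { apply (Rmult_le_reg_r (hnorm H X + 1)). lra. unfold Rdiv. rewrite Rmult_assoc, Rinv_l by lra. lra. }
  assert (0 <= eps * Rabs (s - t)) by nra. nra.
Qed.

Lemma dH_cH (H : Hilbert) S f df t : dH H S f df t -> cH H S f t.
Proof.
  intros D eps He. destruct (D 1 ltac:(lra)) as [eta [Heta P]].
  set (K := hnorm H df + 2). assert (HK : K > 0) by (unfold K; pose proof (hnorm_ge0 H df); lra).
  exists (Rmin eta (eps / K)); split. apply Rmin_pos; auto. apply Rdiv_lt_0_compat; lra.
  intros s Ss Hs. specialize (P s Ss (ltm_l _ _ _ Hs)). pose proof (ltm_r _ _ _ Hs) as Hs2.
  assert (E : hnorm H (hsub H (f s) (f t)) <= hnorm H (hsub H (hsub H (f s) (f t)) (hscal H (s - t) df)) + Rabs (s - t) * hnorm H df).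
  { eapply Rle_trans. apply (norm_tri_sub H _ (hscal H (s - t) df)).
    rewrite hnorm_scal. lra. }
  assert (Rabs (s - t) * K < eps).
  { apply (Rmult_lt_compat_r K) in Hs2; auto. unfold Rdiv in Hs2. rewrite Rmult_assoc, Rinv_l in Hs2 by lra. lra. }
  unfold K in *. pose proof (Rabs_pos (s - t)). pose proof (hnorm_ge0 H df). nra.
Qed.

Lemma cH_ip (H : Hilbert) S f g t : cH H S f t -> cH H S g t -> cR S (fun r => inner H (f r) (g r)) t.
Proof.
  intros Cf Cg eps He.
  set (K := hnorm H (f t) + hnorm H (g t) + 1).
  assert (HK : K > 0) by (unfold K; pose proof (hnorm_ge0 H (f t)); pose proof (hnorm_ge0 H (g t)); lra).
  set (th := Rmin 1 (eps / (2 * K))).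
  assert (Hth : 0 < th). { apply Rmin_pos. lra. apply Rdiv_lt_0_compat; lra. }
  destruct (Cf th Hth) as [e1 [He1 P1]]. destruct (Cg th Hth) as [e2 [He2 P2]].
  exists (Rmin e1 e2); split. apply Rmin_pos; auto.
  intros s Ss Hs. specialize (P1 s Ss (ltm_l _ _ _ Hs)). specialize (P2 s Ss (ltm_r _ _ _ Hs)).
  pose proof (ip_close H (f s) (g s) (f t) (g t) th) as IC.
  assert (th <= 1) by apply Rmin_l. assert (th <= eps / (2 * K)) by apply Rmin_r.
  specialize (IC ltac:(lra) ltac:(lra) ltac:(lra)). fold K in IC.
  assert (th * K <= eps / 2).
  { replace (eps / 2) with (eps / (2 * K) * K) by (field; lra). apply Rmult_le_compat_r; lra. }
  lra.
Qed.

Lemma cR_plus S f g t : cR S f t -> cR S g t -> cR S (fun r => f r + g r) t.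
Proof.
  intros Cf Cg eps He. destruct (Cf (eps/2) ltac:(lra)) as [e1 [He1 P1]].
  destruct (Cg (eps/2) ltac:(lra)) as [e2 [He2 P2]].
  exists (Rmin e1 e2); split. apply Rmin_pos; auto.
  intros s Ss Hs. specialize (P1 s Ss (ltm_l _ _ _ Hs)). specialize (P2 s Ss (ltm_r _ _ _ Hs)).
  replace (f s + g s - (f t + g t)) with ((f s - f t) + (g s - g t)) by ring.
  eapply Rle_lt_trans. apply Rabs_triang. lra.
Qed.
Lemma cR_const S c t : cR S (fun _ => c) t.
Proof. intros eps He. exists 1. split. lra. intros. replace (c - c) with 0 by ring. rewrite Rabs_R0. lra. Qed.
Lemma cR_comp S f t phi l : cR S f t -> derivable_pt_lim phi (f t) l -> cR S (fun r => phi (f r)) t.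
Proof.
  intros C L eps He.
  destruct (lim_to_eps phi (f t) l L 1 ltac:(lra)) as [d [Hd P]].
  set (K := Rabs l + 1). assert (HK : K > 0) by (unfold K; pose proof (Rabs_pos l); lra).
  destruct (C (Rmin d (eps / K))) as [e [He' Q]]. apply Rmin_pos; auto. apply Rdiv_lt_0_compat; lra.
  exists e; split; auto. intros s Ss Hs. specialize (Q s Ss Hs).
  specialize (P (f s) (ltm_l _ _ _ Q)). pose proof (ltm_r _ _ _ Q) as Q2.
  replace (phi (f s) - phi (f t)) with ((phi (f s) - phi (f t) - (f s - f t) * l) + (f s - f t) * l) by ring.
  eapply Rle_lt_trans. apply Rabs_triang. rewrite Rabs_mult.
  assert (Rabs (f s - f t) * K < eps).
  { apply (Rmult_lt_compat_r K) in Q2; auto. unfold Rdiv in Q2. rewrite Rmult_assoc, Rinv_l in Q2 by lra. lra. }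
  unfold K in *. pose proof (Rabs_pos (f s - f t)). pose proof (Rabs_pos l). nra.
Qed.
Lemma cR_mult S f g t : cR S f t -> cR S g t -> cR S (fun r => f r * g r) t.
Proof.
  intros Cf Cg eps He.
  set (K := Rabs (f t) + Rabs (g t) + 1).
  assert (HK : K > 0) by (unfold K; pose proof (Rabs_pos (f t)); pose proof (Rabs_pos (g t)); lra).
  set (th := Rmin 1 (eps / (2 * K))).
  assert (Hth : 0 < th). { apply Rmin_pos. lra. apply Rdiv_lt_0_compat; lra. }
  destruct (Cf th Hth) as [e1 [He1 P1]]. destruct (Cg th Hth) as [e2 [He2 P2]].
  exists (Rmin e1 e2); split. apply Rmin_pos; auto.
  intros s Ss Hs. specialize (P1 s Ss (ltm_l _ _ _ Hs)). specialize (P2 s Ss (ltm_r _ _ _ Hs)).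
  assert (th <= 1) by apply Rmin_l. assert (th <= eps / (2 * K)) by apply Rmin_r.
  assert (th * K <= eps / 2).
  { replace (eps / 2) with (eps / (2 * K) * K) by (field; lra). apply Rmult_le_compat_r; lra. }
  replace (f s * g s - f t * g t) with ((f s - f t) * g s + f t * (g s - g t)) by ring.
  eapply Rle_lt_trans. apply Rabs_triang. rewrite !Rabs_mult.
  assert (Rabs (g s) <= Rabs (g t) + 1).
  { replace (g s) with (g t + (g s - g t)) by ring. eapply Rle_trans. apply Rabs_triang. lra. }
  pose proof (Rabs_pos (f s - f t)). pose proof (Rabs_pos (g s)). pose proof (Rabs_pos (f t)).
  pose proof (Rabs_pos (g s - g t)). pose proof (Rabs_pos (g t)).
  assert (Rabs (f s - f t) * Rabs (g s) <= th * (Rabs (g t) + 1)) by (apply Rmult_le_compat; lra).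
  assert (Rabs (f t) * Rabs (g s - g t) <= Rabs (f t) * th) by (apply Rmult_le_compat_l; lra).
  unfold K in *. nra.
Qed.

Lemma weak_prod (H : Hilbert) S (w z : R -> H) psi z' t :
  dR S (fun r => inner H (w r) (z t)) psi t -> cH H S w t -> dH H S z z' t ->
  dR S (fun r => inner H (w r) (z r)) (psi + inner H (w t) z') t.
Proof.
  intros D1 C D2 eps He.
  set (K1 := hnorm H (w t) + 1). set (K2 := hnorm H z' + 1).
  assert (HK1 : K1 > 0) by (unfold K1; pose proof (hnorm_ge0 H (w t)); lra).
  assert (HK2 : K2 > 0) by (unfold K2; pose proof (hnorm_ge0 H z'); lra).
  destruct (D1 (eps/3) ltac:(lra)) as [e1 [He1 P1]].
  destruct (C (Rmin 1 (eps / (3 * K2)))) as [e2 [He2 P2]].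
  { apply Rmin_pos. lra. apply Rdiv_lt_0_compat; lra. }
  destruct (D2 (eps / (3 * K1))) as [e3 [He3 P3]]. apply Rdiv_lt_0_compat; lra.
  exists (Rmin e1 (Rmin e2 e3)); split. repeat apply Rmin_pos; auto.
  intros s Ss Hs. specialize (P1 s Ss (ltm_l _ _ _ Hs)).
  specialize (P2 s Ss (ltm_l _ _ _ (ltm_r _ _ _ Hs))).
  specialize (P3 s Ss (ltm_r _ _ _ (ltm_r _ _ _ Hs))).
  set (D := hsub H (hsub H (z s) (z t)) (hscal H (s - t) z')) in *.
  assert (Eq : inner H (w s) (z s) - inner H (w t) (z t) - (s - t) * (psi + inner H (w t) z') =
     (inner H (w s) (z t) - inner H (w t) (z t) - (s - t) * psi) + inner H (w s) D
     + (s - t) * inner H (hsub H (w s) (w t)) z').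
  { unfold D. rewrite !ip_subr, ip_scalr, ip_subl. ring. }
  rewrite Eq. clear Eq.
  assert (Hw : hnorm H (w s) <= K1).
  { pose proof (norm_tri_sub H (w s) (w t)). pose proof (Rmin_l 1 (eps / (3 * K2))). unfold K1; lra. }
  assert (T2 : Rabs (inner H (w s) D) <= eps / 3 * Rabs (s - t)).
  { eapply Rle_trans. apply CS. pose proof (hnorm_ge0 H (w s)). pose proof (hnorm_ge0 H D).
    eapply Rle_trans. apply Rmult_le_compat; eauto.
    replace (K1 * (eps / (3 * K1) * Rabs (s - t))) with (eps / 3 * Rabs (s - t)) by (field; lra). lra. }
  assert (T3 : Rabs ((s - t) * inner H (hsub H (w s) (w t)) z') <= eps / 3 * Rabs (s - t)).
  { rewrite Rabs_mult. rewrite Rmult_comm. apply Rmult_le_compat_r. apply Rabs_pos.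
    eapply Rle_trans. apply CS. pose proof (Rmin_r 1 (eps / (3 * K2))).
    pose proof (hnorm_ge0 H (hsub H (w s) (w t))). pose proof (hnorm_ge0 H z').
    apply Rle_trans with (eps / (3 * K2) * K2).
    apply Rmult_le_compat; unfold K2 in *; lra.
    right. field. lra. }
  eapply Rle_trans. apply Rabs_triang. eapply Rle_trans. apply Rplus_le_compat_r. apply Rabs_triang.
  lra.
Qed.

Lemma mvt_abs f f' a b K M :
  (forall r, Rmin a b <= r <= Rmax a b -> derivable_pt_lim f r (f' r)) ->
  (forall r, Rmin a b <= r <= Rmax a b -> Rabs (f' r - K) <= M) ->
  Rabs (f b - f a - (b - a) * K) <= M * Rabs (b - a).
Proof.
  intros D Bd. destruct (Rtotal_order a b) as [Hab|[Hab|Hab]].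
  - rewrite Rmin_left, Rmax_right in * by lra.
    destruct (MVT_cor2 f f' a b Hab D) as [c [Ec Hc]].
    replace (f b - f a - (b - a) * K) with ((f' c - K) * (b - a)) by (rewrite Ec; ring).
    rewrite Rabs_mult. apply Rmult_le_compat_r. apply Rabs_pos. apply Bd; lra.
  - subst. replace (f b - f b - (b - b) * K) with 0 by ring. rewrite Rabs_R0.
    replace (b - b) with 0 by ring. rewrite Rabs_R0. lra.
  - rewrite Rmin_right, Rmax_left in * by lra.
    destruct (MVT_cor2 f f' b a Hab D) as [c [Ec Hc]].
    replace (f b - f a - (b - a) * K) with (- ((f' c - K) * (a - b))) by (rewrite <- (Ropp_involutive (f b - f a)); rewrite Ropp_minus_distr, Ec; ring).
    rewrite Rabs_Ropp, Rabs_mult. rewrite (Rabs_minus_sym b a). apply Rmult_le_compat_r. apply Rabs_pos. apply Bd; lra.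
Qed.


Lemma mvi_H (H : Hilbert) (u w : R -> H) a b c M :
  (forall r, Rmin a b <= r <= Rmax a b -> dH H TT u (w r) r) ->
  (forall r, Rmin a b <= r <= Rmax a b -> hnorm H (hsub H (w r) c) <= M) ->
  hnorm H (hsub H (hsub H (u b) (u a)) (hscal H (b - a) c)) <= M * Rabs (b - a).
Proof.
  intros D Bd. set (X := hsub H (hsub H (u b) (u a)) (hscal H (b - a) c)).
  assert (HM : 0 <= M). { eapply Rle_trans. apply hnorm_ge0. apply (Bd a). split. apply Rmin_l. apply Rmax_l. }
  pose proof (mvt_abs (fun r => inner H (u r) X - r * inner H c X) (fun r => inner H (w r) X - inner H c X) a b 0 (M * hnorm H X)) as MV.
  assert (Ed : forall r, Rmin a b <= r <= Rmax a b ->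
    derivable_pt_lim (fun r => inner H (u r) X - r * inner H c X) r (inner H (w r) X - inner H c X)).
  { intros r Hr. apply dR_to_lim.
    replace (inner H (w r) X - inner H c X) with (inner H (w r) X + (-(inner H c X)) * 1) by ring.
    assert (Did : dR TT (fun x => x) 1 r) by (apply lim_to_dR; apply derivable_pt_lim_id).
    pose proof (dR_plus _ _ _ _ _ r (dH_ip H TT u (w r) r X (D r Hr)) (dR_scal _ _ _ (- inner H c X) r Did)) as DD.
    eapply dR_ext; [ | exact I | exact DD ]. intros; simpl; ring. }
  specialize (MV Ed).
  assert (Eb : forall r, Rmin a b <= r <= Rmax a b -> Rabs (inner H (w r) X - inner H c X - 0) <= M * hnorm H X).
  { intros r Hr. rewrite Rminus_0_r, <- ip_subl. eapply Rle_trans. apply CS.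
    apply Rmult_le_compat_r. apply hnorm_ge0. auto. }
  specialize (MV Eb).
  assert (E : inner H (u b) X - b * inner H c X - (inner H (u a) X - a * inner H c X) - (b - a) * 0 = inner H X X).
  { unfold X at 5. rewrite ip_comb. ring. }
  cbv beta in MV. rewrite E, Rabs_pos_eq in MV by apply ip_pos.
  rewrite <- hnorm_sqm in MV. pose proof (hnorm_ge0 H X). pose proof (Rabs_pos (b - a)).
  destruct (Req_dec (hnorm H X) 0) as [Z|Z]. rewrite Z. nra.
  apply (Rmult_le_reg_l (hnorm H X)). lra. nra.
Qed.

Module PrimMod.
From Coquelicot Require Import Coquelicot.

Lemma cR_TT_cont (c : R -> R) z : cR TT c z -> continuous c z.
Proof.
  intro C. apply continuity_pt_filterlim.
  intros eps He. destruct (C eps He) as [eta [Heta P]]. exists eta; split; auto.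
  intros x [_ Hx]. apply P. exact I. exact Hx.
Qed.

Lemma prim_ex (c : R -> R) : (forall r, r > 0 -> cR TT c r) ->
  exists F : R -> R, forall r, r > 0 -> derivable_pt_lim F r (c r).
Proof.
  intros C. exists (RInt c 1). intros r Hr. apply is_derive_Reals.
  apply (is_derive_RInt c (RInt c 1) 1 r).
  2: apply cR_TT_cont, C; auto.
  assert (Hp: 0 < r/2) by lra.
  exists (mkposreal (r/2) Hp). intros y Hy.
  change (Rabs (y - r) < r/2) in Hy.
  apply (RInt_correct c 1 y). apply ex_RInt_continuous. intros z Hz. apply cR_TT_cont, C.
  apply Rabs_def2 in Hy.
  destruct Hz as [Hz1 _]. assert (0 < Rmin 1 y). { apply Rmin_pos; lra. } lra.
Qed.

End PrimMod.


Lemma minmax a b r : Rmin a b <= r <= Rmax a b -> (a <= r <= b) \/ (b <= r <= a).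
Proof. unfold Rmin, Rmax. destruct (Rle_dec a b); intros; [left|right]; lra. Qed.


Lemma cR_minus S f g t : cR S f t -> cR S g t -> cR S (fun r => f r - g r) t.
Proof.
  intros Cf Cg eps He. destruct (Cf (eps/2) ltac:(lra)) as [e1 [He1 P1]].
  destruct (Cg (eps/2) ltac:(lra)) as [e2 [He2 P2]].
  exists (Rmin e1 e2); split. apply Rmin_pos; auto.
  intros s Ss Hs. specialize (P1 s Ss (ltm_l _ _ _ Hs)). specialize (P2 s Ss (ltm_r _ _ _ Hs)).
  replace (f s - g s - (f t - g t)) with ((f s - f t) + - (g s - g t)) by ring.
  eapply Rle_lt_trans. apply Rabs_triang. rewrite Rabs_Ropp. lra.
Qed.

Definition EH (H:Hilbert) (DB : H -> Prop) (B : H -> H) (delta : R) (g u w : R -> H) : Prop :=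
  (forall t, t > 0 -> DB (u t)) /\
  (forall t, t > 0 -> dH H TT u (w t) t) /\
  (forall t, t > 0 -> cH H TT w t) /\
  (forall t, t > 0 -> cH H TT (fun r => B (u r)) t) /\
  (forall t, t > 0 -> cH H TT g t) /\
  (forall v, DB v -> forall t, t > 0 -> dR TT (fun r => inner H (w r) v)
       (inner H (g t) v - 2 * delta * inner H (w t) v - inner H (B (u t)) (B v)) t).

Definition cfun (H : Hilbert) (B : H -> H) (u w : R -> H) (h r : R) : R :=
  inner H (B (u r)) (B (u (r + h))) - inner H (w r) (w (r + h)).
Definition Phi (H : Hilbert) (u w : R -> H) (h : R) (F : R -> R) (x : R) : R :=
  inner H (w x) (hsub H (u (x + h)) (u (x - h))) / (2 * h) + (F x - F (x - h)) / (2 * h).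
Definition E2 (H : Hilbert) (B : H -> H) (u w : R -> H) (x : R) : R :=
  (inner H (w x) (w x) + inner H (B (u x)) (B (u x))) / 2.
Definition F0 (H : Hilbert) (delta : R) (g w : R -> H) (x : R) : R :=
  inner H (g x) (w x) - 2 * delta * inner H (w x) (w x).

Lemma dR_eq S f df df' t : df = df' -> dR S f df t -> dR S f df' t.
Proof. intros ->; auto. Qed.

Lemma cfun_cont H DB B delta g u w h : EH H DB B delta g u w -> h > 0 ->
  forall r, r > 0 -> cR TT (cfun H B u w h) r.
Proof.
  intros (Hu & Hd & Hw & HU & Hg & Hweak) Hh r Hr. unfold cfun.
  apply cR_minus; apply cH_ip.
  - apply HU; auto.
  - apply (cH_shift H (fun r => B (u r))). apply HU. lra.
  - apply Hw; auto.
  - apply (cH_shift H w). apply Hw. lra.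
Qed.

Lemma Phi_deriv H DB B delta g u w h F : EH H DB B delta g u w -> h > 0 ->
  (forall r, r > 0 -> derivable_pt_lim F r (cfun H B u w h r)) ->
  forall r, r > h -> derivable_pt_lim (Phi H u w h F) r
    ((inner H (g r) (hsub H (u (r + h)) (u (r - h)))
      - 2 * delta * inner H (w r) (hsub H (u (r + h)) (u (r - h)))) / (2 * h)).
Proof.
  intros HE Hh HF r Hr. destruct HE as (Hu & Hd & Hw & HU & Hg & Hweak).
  assert (D1 := weak_prod H TT w (fun q => u (q + h)) _ (w (r + h)) r
     (Hweak (u (r + h)) (Hu (r + h) ltac:(lra)) r ltac:(lra)) (Hw r ltac:(lra))
     (dH_shift H u (w (r + h)) r h (Hd (r + h) ltac:(lra)))).
  assert (D2 := weak_prod H TT w (fun q => u (q + - h)) _ (w (r + - h)) r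
     (Hweak (u (r + - h)) (Hu (r + - h) ltac:(lra)) r ltac:(lra)) (Hw r ltac:(lra))
     (dH_shift H u (w (r + - h)) r (- h) (Hd (r + - h) ltac:(lra)))).
  assert (D3 := lim_to_dR F _ r (HF r ltac:(lra))).
  assert (D4 := dR_shift F _ r (- h) (lim_to_dR F _ (r + - h) (HF (r + - h) ltac:(lra)))).
  assert (DD := dR_scal _ _ _ (/ (2 * h)) r (dR_plus _ _ _ _ _ r (dR_plus _ _ _ _ _ r D1 (dR_scal _ _ _ (-1) r D2))
          (dR_plus _ _ _ _ _ r D3 (dR_scal _ _ _ (-1) r D4)))).
  apply dR_to_lim.
  eapply dR_ext; [ | exact I | eapply dR_eq; [ | exact DD]].
  - intros s _. cbv beta. unfold Phi. rewrite ip_subr. unfold Rminus. field. lra.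
  - unfold cfun. rewrite !ip_subr. unfold Rminus.
    replace (r + - h + h) with r by ring.
    rewrite (ip_sym H (B (u (r + - h))) (B (u r))), (ip_sym H (w (r + - h)) (w r)).
    field. lra.
Qed.

Lemma Phi_val H DB B delta g u w : EH H DB B delta g u w ->
  forall x, x > 0 -> forall rho, rho > 0 -> exists h1, h1 > 0 /\
  forall h F, 0 < h -> h < h1 -> h < x / 2 ->
    (forall r, r > 0 -> derivable_pt_lim F r (cfun H B u w h r)) ->
    Rabs (Phi H u w h F x - E2 H B u w x) <= rho.
Proof.
  intros HE x Hx rho Hrho. destruct HE as (Hu & Hd & Hw & HU & Hg & Hweak).
  set (a := hnorm H (w x)). set (b := hnorm H (B (u x))).
  assert (Ha : 0 <= a) by apply hnorm_ge0. assert (Hb : 0 <= b) by apply hnorm_ge0.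
  set (Kx := 3 * a + 2 * b + 2).
  set (th := Rmin 1 (rho / Kx)).
  assert (Hth : 0 < th). { apply Rmin_pos. lra. apply Rdiv_lt_0_compat; unfold Kx; lra. }
  assert (Hth1 : th <= 1) by apply Rmin_l.
  assert (HthK : th * Kx <= rho).
  { apply Rle_trans with (rho / Kx * Kx). apply Rmult_le_compat_r. unfold Kx; lra. apply Rmin_r.
    right. field. unfold Kx; lra. }
  destruct (Hw x Hx th Hth) as [e1 [He1 P1]].
  destruct (HU x Hx th Hth) as [e2 [He2 P2]].
  exists (Rmin e1 e2); split. apply Rmin_pos; auto.
  intros h F Hh Hh1 Hh2 HF.
  assert (Hh1a : h < e1) by (eapply ltm_l; eauto). assert (Hh1b : h < e2) by (eapply ltm_r; eauto).
  pose proof (mvi_H H u w (x - h) (x + h) (w x) th) as MA.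
  assert (MA1 : forall r, Rmin (x - h) (x + h) <= r <= Rmax (x - h) (x + h) -> dH H TT u (w r) r).
  { intros r Hr. apply minmax in Hr. apply Hd. lra. }
  assert (MA2 : forall r, Rmin (x - h) (x + h) <= r <= Rmax (x - h) (x + h) -> hnorm H (hsub H (w r) (w x)) <= th).
  { intros r Hr. apply minmax in Hr. left. apply P1. exact I. apply Rabs_def1; lra. }
  specialize (MA MA1 MA2).
  set (D := hsub H (hsub H (u (x + h)) (u (x - h))) (hscal H (x + h - (x - h)) (w x))) in *.
  replace (Rabs (x + h - (x - h))) with (2 * h) in MA by (rewrite Rabs_pos_eq; lra).
  assert (EA : inner H (w x) (hsub H (u (x + h)) (u (x - h))) / (2 * h) - inner H (w x) (w x)
               = inner H (w x) D / (2 * h)).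
  { unfold D. rewrite !ip_subr, ip_scalr. field. lra. }
  assert (BA : Rabs (inner H (w x) D / (2 * h)) <= a * th).
  { unfold Rdiv. rewrite Rabs_mult, Rabs_inv, (Rabs_pos_eq (2 * h)) by lra.
    apply (Rmult_le_reg_r (2 * h)). lra. rewrite Rmult_assoc, Rinv_l by lra.
    eapply Rle_trans. rewrite Rmult_1_r. apply CS. fold a.
    pose proof (hnorm_ge0 H D). replace (a * th * (2 * h)) with (a * (th * (2 * h))) by ring.
    apply Rmult_le_compat_l; auto. }
  set (K := inner H (B (u x)) (B (u x)) - inner H (w x) (w x)).
  set (M := th * (2 * b + 1) + th * (2 * a + 1)).
  pose proof (mvt_abs F (cfun H B u w h) (x - h) x K M) as MB.
  assert (MB1 : forall r, Rmin (x - h) x <= r <= Rmax (x - h) x -> derivable_pt_lim F r (cfun H B u w h r)).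
  { intros r Hr. apply minmax in Hr. apply HF. lra. }
  assert (MB2 : forall r, Rmin (x - h) x <= r <= Rmax (x - h) x -> Rabs (cfun H B u w h r - K) <= M).
  { intros r Hr. apply minmax in Hr. unfold cfun, K, M.
    replace (inner H (B (u r)) (B (u (r + h))) - inner H (w r) (w (r + h)) -
      (inner H (B (u x)) (B (u x)) - inner H (w x) (w x))) with
      ((inner H (B (u r)) (B (u (r + h))) - inner H (B (u x)) (B (u x))) -
       (inner H (w r) (w (r + h)) - inner H (w x) (w x))) by ring.
    pose proof (Rabs_triang (inner H (B (u r)) (B (u (r + h))) - inner H (B (u x)) (B (u x)))
                 (- (inner H (w r) (w (r + h)) - inner H (w x) (w x)))) as T.
    rewrite Rabs_Ropp in T.
    pose proof (ip_close H (B (u r)) (B (u (r + h))) (B (u x)) (B (u x)) th) as C1.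
    pose proof (ip_close H (w r) (w (r + h)) (w x) (w x) th) as C2.
    assert (Q1 : hnorm H (hsub H (B (u r)) (B (u x))) <= th) by (left; apply P2; [exact I| apply Rabs_def1; lra]).
    assert (Q2 : hnorm H (hsub H (B (u (r + h))) (B (u x))) <= th) by (left; apply P2; [exact I| apply Rabs_def1; lra]).
    assert (Q3 : hnorm H (hsub H (w r) (w x)) <= th) by (left; apply P1; [exact I| apply Rabs_def1; lra]).
    assert (Q4 : hnorm H (hsub H (w (r + h)) (w x)) <= th) by (left; apply P1; [exact I| apply Rabs_def1; lra]).
    specialize (C1 ltac:(lra) Q1 Q2). specialize (C2 ltac:(lra) Q3 Q4). unfold M, a, b in *.
    change (?p + - ?q) with (p - q) in T. lra. }
  specialize (MB MB1 MB2).
  replace (x - (x - h)) with h in MB by ring. rewrite (Rabs_pos_eq h) in MB by lra.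
  assert (BB : Rabs ((F x - F (x - h)) / (2 * h) - K / 2) <= M / 2).
  { replace ((F x - F (x - h)) / (2 * h) - K / 2) with ((F x - F (x - h) - h * K) / (2 * h)) by (field; lra).
    unfold Rdiv. rewrite Rabs_mult, Rabs_inv, (Rabs_pos_eq (2 * h)) by lra.
    apply (Rmult_le_reg_r (2 * h)). lra. rewrite Rmult_assoc, Rinv_l by lra. lra. }
  replace (Phi H u w h F x - E2 H B u w x) with
    ((inner H (w x) (hsub H (u (x + h)) (u (x - h))) / (2 * h) - inner H (w x) (w x)) +
     ((F x - F (x - h)) / (2 * h) - K / 2)) by (unfold Phi, E2, K; field; lra).
  rewrite EA. eapply Rle_trans. apply Rabs_triang.
  unfold M, Kx in *. nra.
Qed.

Lemma le_eps x y : (forall rho, rho > 0 -> x <= y + rho) -> x <= y.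
Proof.
  intros Hr. destruct (Rle_dec x y) as [|n]; auto. exfalso.
  specialize (Hr ((x - y) / 2) ltac:(lra)). lra.
Qed.

Lemma ip_div_bound (H : Hilbert) p D h th P : h > 0 -> hnorm H D <= th * (2 * h) ->
  hnorm H p <= P -> 0 <= th -> Rabs (inner H p D / (2 * h)) <= P * th.
Proof.
  intros Hh HD Hp Hth. unfold Rdiv. rewrite Rabs_mult, Rabs_inv, (Rabs_pos_eq (2 * h)) by lra.
  apply (Rmult_le_reg_r (2 * h)). lra. rewrite Rmult_assoc, Rinv_l by lra. rewrite Rmult_1_r.
  eapply Rle_trans. apply CS. pose proof (hnorm_ge0 H D). pose proof (hnorm_ge0 H p).
  replace (P * th * (2 * h)) with (P * (th * (2 * h))) by ring.
  apply Rmult_le_compat; auto.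
Qed.

Lemma E2_deriv H DB B delta g u w : EH H DB B delta g u w -> delta > 0 ->
  forall T, T > 0 -> dR TT (E2 H B u w) (F0 H delta g w T) T.
Proof.
  intros HE Hdel T HT eps Heps. pose proof HE as HE'. destruct HE' as (Hu & Hd & Hw & HU & Hg & Hweak).
  set (a := hnorm H (w T)). set (G := hnorm H (g T)).
  assert (Ha : 0 <= a) by apply hnorm_ge0. assert (HG : 0 <= G) by apply hnorm_ge0.
  set (Kk := (G + 1) + 2 * delta * (a + 1) + a + 2 * delta * a).
  assert (HKk : Kk > 0) by (unfold Kk; nra).
  set (th := Rmin 1 (eps / (2 * Kk))).
  assert (Hth : 0 < th). { apply Rmin_pos. lra. apply Rdiv_lt_0_compat; lra. }
  assert (Hth1 : th <= 1) by apply Rmin_l.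
  assert (HthK : th * Kk <= eps / 2).
  { apply Rle_trans with (eps / (2 * Kk) * Kk). apply Rmult_le_compat_r. lra. apply Rmin_r.
    right. field. lra. }
  destruct (Hw T HT th Hth) as [ew [Hew Pw]].
  destruct (Hg T HT th Hth) as [eg [Heg Pg]].
  set (e0 := Rmin (T / 4) (Rmin ew eg)).
  assert (He0 : e0 > 0) by (unfold e0; repeat apply Rmin_pos; lra).
  assert (He0T : e0 <= T / 4) by apply Rmin_l.
  assert (He0w : e0 <= ew) by (eapply Rle_trans; [apply Rmin_r|apply Rmin_l]).
  assert (He0g : e0 <= eg) by (eapply Rle_trans; [apply Rmin_r|apply Rmin_r]).
  exists (e0 / 2). split. lra.
  intros s _ Hs. apply Rabs_def2 in Hs as Hs'.
  assert (Hs0 : s > 0) by lra.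
  apply (Rle_trans _ (eps / 2 * Rabs (s - T))).
  2: { pose proof (Rabs_pos (s - T)). nra. }
  apply le_eps. intros rho Hrho.
  destruct (Phi_val H DB B delta g u w HE T HT (rho / 2) ltac:(lra)) as [h1 [Hh1 V1]].
  destruct (Phi_val H DB B delta g u w HE s Hs0 (rho / 2) ltac:(lra)) as [h2 [Hh2 V2]].
  set (h := Rmin (Rmin h1 h2) (Rmin (e0 / 2) (T / 8)) / 2).
  assert (Hhp : h > 0).
  { unfold h. assert (0 < Rmin (Rmin h1 h2) (Rmin (e0 / 2) (T / 8))) by (repeat apply Rmin_pos; lra). lra. }
  assert (Hhh1 : h < h1).
  { unfold h. assert (Rmin (Rmin h1 h2) (Rmin (e0 / 2) (T / 8)) <= h1) by (eapply Rle_trans; [apply Rmin_l|apply Rmin_l]). lra. }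
  assert (Hhh2 : h < h2).
  { unfold h. assert (Rmin (Rmin h1 h2) (Rmin (e0 / 2) (T / 8)) <= h2) by (eapply Rle_trans; [apply Rmin_l|apply Rmin_r]). lra. }
  assert (Hhe : h <= e0 / 4).
  { unfold h. assert (Rmin (Rmin h1 h2) (Rmin (e0 / 2) (T / 8)) <= e0 / 2) by (eapply Rle_trans; [apply Rmin_r|apply Rmin_l]). lra. }
  assert (HhT : h <= T / 16).
  { unfold h. assert (Rmin (Rmin h1 h2) (Rmin (e0 / 2) (T / 8)) <= T / 8) by (eapply Rle_trans; [apply Rmin_r|apply Rmin_r]). lra. }
  destruct (PrimMod.prim_ex (cfun H B u w h) (cfun_cont H DB B delta g u w h HE Hhp)) as [F HF].
  specialize (V1 h F Hhp Hhh1 ltac:(lra) HF). specialize (V2 h F Hhp Hhh2 ltac:(lra) HF).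
  pose proof (mvt_abs (Phi H u w h F)
     (fun r => (inner H (g r) (hsub H (u (r + h)) (u (r - h)))
      - 2 * delta * inner H (w r) (hsub H (u (r + h)) (u (r - h)))) / (2 * h)) T s (F0 H delta g w T) (eps / 2)) as MV.
  assert (M1 : forall r, Rmin T s <= r <= Rmax T s -> derivable_pt_lim (Phi H u w h F) r
     ((inner H (g r) (hsub H (u (r + h)) (u (r - h)))
      - 2 * delta * inner H (w r) (hsub H (u (r + h)) (u (r - h)))) / (2 * h))).
  { intros r Hr. apply minmax in Hr. apply (Phi_deriv H DB B delta g u w h F HE Hhp HF). lra. }
  assert (M2 : forall r, Rmin T s <= r <= Rmax T s ->
     Rabs ((inner H (g r) (hsub H (u (r + h)) (u (r - h)))
      - 2 * delta * inner H (w r) (hsub H (u (r + h)) (u (r - h)))) / (2 * h) - F0 H delta g w T) <= eps / 2).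
  { intros r Hr. apply minmax in Hr.
    pose proof (mvi_H H u w (r - h) (r + h) (w T) th) as MA.
    assert (MA1 : forall q, Rmin (r - h) (r + h) <= q <= Rmax (r - h) (r + h) -> dH H TT u (w q) q).
    { intros q Hq. apply minmax in Hq. apply Hd. lra. }
    assert (MA2 : forall q, Rmin (r - h) (r + h) <= q <= Rmax (r - h) (r + h) -> hnorm H (hsub H (w q) (w T)) <= th).
    { intros q Hq. apply minmax in Hq. left. apply Pw. exact I. apply Rabs_def1; lra. }
    specialize (MA MA1 MA2).
    set (D := hsub H (hsub H (u (r + h)) (u (r - h))) (hscal H (r + h - (r - h)) (w T))) in *.
    replace (Rabs (r + h - (r - h))) with (2 * h) in MA by (rewrite Rabs_pos_eq; lra).
    assert (Qg : hnorm H (hsub H (g r) (g T)) <= th) by (left; apply Pg; [exact I|apply Rabs_def1; lra]).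
    assert (Qw : hnorm H (hsub H (w r) (w T)) <= th) by (left; apply Pw; [exact I|apply Rabs_def1; lra]).
    assert (Ngr : hnorm H (g r) <= G + 1) by (pose proof (norm_tri_sub H (g r) (g T)); unfold G; lra).
    assert (Nwr : hnorm H (w r) <= a + 1) by (pose proof (norm_tri_sub H (w r) (w T)); unfold a; lra).
    assert (B1 := ip_div_bound H (g r) D h th (G + 1) Hhp MA Ngr ltac:(lra)).
    assert (B2 := ip_div_bound H (w r) D h th (a + 1) Hhp MA Nwr ltac:(lra)).
    assert (B3 : Rabs (inner H (hsub H (g r) (g T)) (w T)) <= th * a).
    { eapply Rle_trans. apply CS. apply Rmult_le_compat_r; auto. }
    assert (B4 : Rabs (inner H (hsub H (w r) (w T)) (w T)) <= th * a).
    { eapply Rle_trans. apply CS. apply Rmult_le_compat_r; auto. }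
    assert (Eq : (inner H (g r) (hsub H (u (r + h)) (u (r - h)))
      - 2 * delta * inner H (w r) (hsub H (u (r + h)) (u (r - h)))) / (2 * h) - F0 H delta g w T
      = inner H (g r) D / (2 * h) + (- (2 * delta)) * (inner H (w r) D / (2 * h))
        + inner H (hsub H (g r) (g T)) (w T) + (- (2 * delta)) * inner H (hsub H (w r) (w T)) (w T)).
    { unfold D, F0. rewrite !ip_subr, !ip_scalr, !ip_subl. field. lra. }
    rewrite Eq.
    eapply Rle_trans. apply Rabs_triang. eapply Rle_trans. apply Rplus_le_compat_r. apply Rabs_triang.
    eapply Rle_trans. apply Rplus_le_compat_r. apply Rplus_le_compat_r. apply Rabs_triang.
    rewrite !Rabs_mult, Rabs_Ropp, (Rabs_pos_eq (2 * delta)) by lra.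
    unfold Kk in HthK. nra. }
  specialize (MV M1 M2).
  replace (E2 H B u w s - E2 H B u w T - (s - T) * F0 H delta g w T) with
    ((Phi H u w h F s - Phi H u w h F T - (s - T) * F0 H delta g w T)
     - (Phi H u w h F s - E2 H B u w s) + (Phi H u w h F T - E2 H B u w T)) by ring.
  eapply Rle_trans. apply Rabs_triang. eapply Rle_trans. apply Rplus_le_compat_r. apply Rabs_triang.
  rewrite Rabs_Ropp. lra.
Qed.


Lemma hsub_hsub (H : Hilbert) x y : hsub H x (hsub H x y) = y.
Proof.
  unfold hsub. rewrite !(hopp_scal H). rewrite hscalDr, hscalA.
  replace (-1 * -1) with 1 by ring. rewrite hscal1, haddA, <- hopp_scal, haddN, haddC, hadd0. auto.
Qed.

Lemma hnorm_sub_scal0 (H : Hilbert) X Y : hnorm H (hsub H X (hscal H 0 Y)) = hnorm H X.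
Proof. unfold hnorm. f_equal. rewrite !ip_subl, !ip_subr, !ip_scall, !ip_scalr. ring. Qed.



Lemma Q_comb (H : Hilbert) DA A Q : is_orth_proj H (orth H (kerA H DA A)) Q ->
  forall a b c e,
  hnorm H (hsub H (hsub H (Q a) (Q b)) (hscal H c (Q e))) <= hnorm H (hsub H (hsub H a b) (hscal H c e)).
Proof.
  intros HQ a b c e.
  set (z := hsub H (hsub H a b) (hscal H c e)).
  set (X := hsub H (hsub H (Q a) (Q b)) (hscal H c (Q e))).
  set (Y := Q z).
  assert (PQ : forall x m, orth H (kerA H DA A) m -> inner H (Q x) m = inner H x m).
  { intros x m Hm. destruct (HQ x) as [_ Hx]. specialize (Hx m Hm). rewrite ip_subl in Hx. lra. }
  assert (MX : orth H (kerA H DA A) X).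
  { intros k Hk. unfold X. rewrite !ip_subr, ip_scalr.
    rewrite (proj1 (HQ a) k Hk), (proj1 (HQ b) k Hk), (proj1 (HQ e) k Hk). ring. }
  assert (MY : orth H (kerA H DA A) Y) by (apply (proj1 (HQ z))).
  assert (EX : forall m, orth H (kerA H DA A) m -> inner H X m = inner H Y m).
  { intros m Hm. unfold Y. rewrite PQ by auto. unfold X, z. rewrite !ip_subl, !ip_scall, !PQ by auto. ring. }
  assert (E1 := EX X MX). assert (E2 := EX Y MY).
  assert (EYY : inner H X X = inner H Y Y) by (rewrite E1, ip_sym, E2; auto).
  assert (Ez : inner H (hsub H z Y) Y = 0) by (apply (proj2 (HQ z)); auto).
  rewrite ip_subl in Ez.
  pose proof (ip_pos H (hsub H z Y)). rewrite ip_subl, !ip_subr in H0.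
  rewrite (ip_sym H Y z) in H0.
  apply hnorm_le. apply hnorm_ge0. rewrite hnorm_sqm. lra.
Qed.

Lemma Q_norm (H : Hilbert) DA A Q : is_orth_proj H (orth H (kerA H DA A)) Q ->
  forall x, inner H x (Q x) = inner H (Q x) (Q x) /\ inner H (Q x) (Q x) <= inner H x x.
Proof.
  intros HQ x. destruct (HQ x) as [Mx Hx]. specialize (Hx (Q x) Mx). rewrite ip_subl in Hx.
  split. lra. pose proof (ip_pos H (hsub H x (Q x))). rewrite ip_subl, !ip_subr in H0.
  rewrite (ip_sym H (Q x) x) in H0. lra.
Qed.

Lemma Q_B (H : Hilbert) DA A DB B Q : sa_nonneg_op H DA A -> is_sqrt_op H DA A DB B ->
  is_orth_proj H (orth H (kerA H DA A)) Q ->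
  forall x, DB x -> DB (Q x) /\ forall y, inner H y (B (Q x)) = inner H y (B x).
Proof.
  intros [_ [_ [SA _]]] [[[SubB [LinB1 LinB2]] [_ [SAB _]]] [DAB AB]] HQ x Hx.
  set (z := hsub H x (Q x)).
  assert (Hker : DA z /\ h0 H = A z).
  { apply (proj1 (SA z (h0 H))). intros x' Hx'. rewrite ip_0r.
    assert (M : orth H (kerA H DA A) (A x')).
    { intros k [Hk Ak]. rewrite ip_sym.
      assert (Sym := proj2 (SA k (A k)) (conj Hk eq_refl) x' Hx'). rewrite Sym, Ak. apply ip_0r. }
    rewrite ip_sym. apply (proj2 (HQ x)). auto. }
  destruct Hker as [Dz Az].
  destruct (proj1 (DAB z) Dz) as [DBz DBBz].
  assert (Bz0 : inner H (B z) (B z) = 0).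
  { assert (Sym := proj2 (SAB (B z) (B (B z))) (conj DBBz eq_refl) z DBz).
    rewrite Sym, <- AB, <- Az by auto. apply ip_0r. }
  assert (EQ : Q x = hsub H x z) by (unfold z; rewrite hsub_hsub; auto).
  destruct SubB as [_ [SubAdd SubScal]].
  assert (DBoz : DB (hopp H z)) by (rewrite hopp_scal; apply SubScal; auto).
  assert (DQ : DB (Q x)) by (rewrite EQ; apply SubAdd; auto).
  split; auto. intros y. rewrite EQ. unfold hsub. rewrite LinB1 by auto.
  rewrite hopp_scal, LinB2 by auto. rewrite ip_addr, ip_scalr.
  assert (inner H y (B z) = 0).
  { pose proof (CS H y (B z)). unfold hnorm at 2 in H0. rewrite Bz0, sqrt_0, Rmult_0_r in H0.
    pose proof (Rabs_pos (inner H y (B z))). destruct (Req_dec (inner H y (B z)) 0) as [e|n]; auto. apply Rabs_no_R0 in n. lra. }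
  rewrite H0. ring.
Qed.


Lemma Rabs_le_inv x y : Rabs x <= y -> - y <= x <= y.
Proof. intros. pose proof (Rle_abs x). pose proof (Rle_abs (- x)). rewrite Rabs_Ropp in H1. lra. Qed.

Lemma div_nonneg x y : 0 <= x -> 0 < y -> 0 <= x / y.
Proof. intros. unfold Rdiv. apply Rmult_le_pos; auto. left. apply Rinv_0_lt_compat; auto. Qed.

Lemma sqnn x : 0 <= x * x.
Proof. apply Rle_0_sqr. Qed.

Lemma mu_facts nu delta : 0 < nu -> 0 < delta ->
  let mu := Rmin (Rmin (1/2) (nu / 2)) (Rmin (delta / 2) (nu / (5 * delta))) in
  0 < mu /\ mu <= 1/2 /\ mu <= nu / 2 /\ mu <= delta / 2 /\ 5 * mu * delta <= nu.
Proof.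
  intros Hn Hd mu.
  assert (0 < nu / (5 * delta)) by (apply Rdiv_lt_0_compat; lra).
  assert (0 < mu) by (unfold mu; repeat apply Rmin_pos; lra).
  assert (A1 : mu <= Rmin (1/2) (nu/2)) by apply Rmin_l.
  assert (A2 : mu <= Rmin (delta/2) (nu / (5 * delta))) by apply Rmin_r.
  pose proof (Rmin_l (1/2) (nu/2)). pose proof (Rmin_r (1/2) (nu/2)).
  pose proof (Rmin_l (delta/2) (nu / (5 * delta))). pose proof (Rmin_r (delta/2) (nu / (5 * delta))).
  repeat split; try lra.
  assert (mu * (5 * delta) <= nu / (5 * delta) * (5 * delta)) by (apply Rmult_le_compat_r; lra).
  replace (nu / (5 * delta) * (5 * delta)) with nu in H5 by (field; lra). lra.
Qed.

Lemma ineq_bounds mu nu a b q p :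
  0 < mu -> mu <= 1/2 -> mu <= nu / 2 -> 0 < nu -> 0 <= a -> 0 <= b -> 0 <= q ->
  nu * (q * q) <= b * b -> Rabs p <= a * q ->
  1/2 * (a * a + b * b) <= a * a + b * b + 2 * mu * p /\ a * a + b * b + 2 * mu * p <= 2 * (a * a + b * b).
Proof.
  intros. apply Rabs_le_inv in H7.
  assert (4 * mu * mu <= nu) by nra.
  assert (4 * mu * mu * (q * q) <= b * b) by nra.
  assert (4 * mu * a * q <= a * a + 4 * mu * mu * (q * q)) by (pose proof (Rle_0_sqr (a - 2 * mu * q)); unfold Rsqr in *; lra).
  split; nra.
Qed.

Lemma ineq_main mu nu delta a b q G gw gq p wQw :
  0 < delta -> 0 < nu -> 0 < mu -> mu <= 1/2 -> mu <= nu / 2 -> mu <= delta / 2 -> 5 * mu * delta <= nu ->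
  0 <= a -> 0 <= b -> 0 <= q -> 0 <= G -> nu * (q * q) <= b * b ->
  Rabs gw <= G * a -> Rabs gq <= G * q -> Rabs p <= a * q -> 0 <= wQw <= a * a ->
  -4 * delta * (a * a) + 2 * gw + 2 * mu * (gq - 2 * delta * p - b * b + wQw)
  <= - (mu / 2) * (a * a + b * b + 2 * mu * p) + 2 / delta * (G * G).
Proof.
  intros Hd Hn Hm Hm1 Hm2 Hm3 Hm4 Ha Hb Hq HG Hp Hgw Hgq Hpp HQ.
  apply Rabs_le_inv in Hgw. apply Rabs_le_inv in Hgq. apply Rabs_le_inv in Hpp.
  set (X := G * G / delta).
  assert (S1 : 2 * gw <= delta * (a * a) + X).
  { assert (0 <= (delta * a - G) * (delta * a - G) / delta) by (apply div_nonneg; [apply sqnn | lra]).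
    assert ((delta * a - G) * (delta * a - G) / delta = delta * (a * a) - 2 * a * G + X) by (unfold X; field; lra).
    nra. }
  assert (S2 : 2 * mu * gq <= mu * mu * delta * (q * q) + X).
  { assert (0 <= (mu * delta * q - G) * (mu * delta * q - G) / delta) by (apply div_nonneg; [apply sqnn | lra]).
    assert ((mu * delta * q - G) * (mu * delta * q - G) / delta = mu * mu * delta * (q * q) - 2 * mu * q * G + X) by (unfold X; field; lra).
    assert (mu * gq <= mu * (G * q)) by nra. nra. }
  set (c := 4 * mu * delta + mu * mu).
  assert (Hmd : 0 < mu * delta) by (apply Rmult_lt_0_compat; lra).
  assert (Hmm : 0 < mu * mu) by (apply Rmult_lt_0_compat; lra).
  assert (Hc : 0 < c) by (unfold c; lra).
  assert (S3 : - 4 * mu * delta * p + mu * mu * p <= c * (a * q)).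
  { assert (mu * delta * (- p) <= mu * delta * (a * q)) by (apply Rmult_le_compat_l; lra).
    assert (mu * mu * p <= mu * mu * (a * q)) by (apply Rmult_le_compat_l; lra).
    unfold c. lra. }
  assert (S4 : c * (a * q) <= 7 / 4 * delta * (a * a) + c * c / (7 * delta) * (q * q)).
  { assert (0 <= (7 / 4 * delta * a - c / 2 * q) * (7 / 4 * delta * a - c / 2 * q) / (7 / 4 * delta))
      by (apply div_nonneg; [apply sqnn | lra]).
    assert ((7 / 4 * delta * a - c / 2 * q) * (7 / 4 * delta * a - c / 2 * q) / (7 / 4 * delta)
       = 7 / 4 * delta * (a * a) - c * (a * q) + c * c / (7 * delta) * (q * q)) by (field; lra).
    lra. }
  assert (S5 : c * c / (7 * delta) + mu * mu * delta <= 3 / 2 * mu * nu).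
  { assert (E : c * c / (7 * delta) = mu * (mu * (16 * delta + 8 * mu) + mu * mu * mu / delta) / 7) by (unfold c; field; lra).
    assert (T1 : mu * (16 * delta) <= 16 * nu / 5) by nra.
    assert (T2 : mu * mu <= nu / 4) by nra.
    assert (T3 : mu / delta <= 1 / 2).
    { apply (Rmult_le_reg_r delta). lra. unfold Rdiv. rewrite Rmult_assoc, Rinv_l by lra. lra. }
    assert (T4 : mu * mu * mu / delta <= nu / 8).
    { replace (mu * mu * mu / delta) with ((mu / delta) * (mu * mu)) by (field; lra).
      assert (0 <= mu / delta) by (apply div_nonneg; lra). nra. }
    assert (T5 : mu * (mu * (16 * delta + 8 * mu) + mu * mu * mu / delta) <= mu * (16 * nu / 5 + 2 * nu + nu / 8)) by nra.
    assert (T6 : mu * mu * delta <= mu * nu / 5) by nra.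
    rewrite E. nra. }
  assert (S6 : (c * c / (7 * delta) + mu * mu * delta) * (q * q) <= 3 / 2 * mu * (b * b)).
  { assert (0 <= q * q) by nra. apply Rle_trans with (3 / 2 * mu * nu * (q * q)). apply Rmult_le_compat_r; auto.
    nra. }
  assert (E2 : 2 / delta * (G * G) = 2 * X) by (unfold X; field; lra).
  rewrite E2.
  assert (mu * wQw <= mu * (a * a)) by (apply Rmult_le_compat_l; lra).
  assert (mu * (a * a) <= delta / 2 * (a * a)) by (apply Rmult_le_compat_r; [apply sqnn|lra]).
  assert (mu * (b * b) >= 0) by (pose proof (sqnn b); nra).
  lra.
Qed.


Lemma Rpower_pos x y : 0 < Rpower x y.
Proof. unfold Rpower. apply exp_pos. Qed.

Lemma rp_facts N d : 0 < N ->
  Rpower N (2 + d) = N * N * (Rpower N (d/2) * Rpower N (d/2)) /\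
  Rpower N (- (2 + d)) = / (N * N * (Rpower N (d/2) * Rpower N (d/2))) /\
  Rpower N (- (4 + d)) = / (N * N * N * N * (Rpower N (d/2) * Rpower N (d/2))).
Proof.
  intros HN.
  assert (E1 : Rpower N (2 + d) = N * N * (Rpower N (d/2) * Rpower N (d/2))).
  { replace (2 + d) with (1 + 1 + (d/2 + d/2)) by field. rewrite !Rpower_plus, Rpower_1 by auto. ring. }
  assert (E2 : Rpower N (4 + d) = N * N * N * N * (Rpower N (d/2) * Rpower N (d/2))).
  { replace (4 + d) with (1 + 1 + 1 + 1 + (d/2 + d/2)) by field. rewrite !Rpower_plus, Rpower_1 by auto. ring. }
  split; auto. split; rewrite Rpower_Ropp; [rewrite E1 | rewrite E2]; auto.
Qed.

Lemma part2 (H : Hilbert) (S : R -> Prop) (u w : R -> H) (E Eh Eh' gg : R -> R) mu d :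
  0 < mu -> 0 <= d ->
  (forall t, S t -> u t <> h0 H) ->
  (forall t, S t -> dH H S u (w t) t) ->
  (forall t, S t -> cH H S w t) ->
  (forall t, S t -> dR S Eh (Eh' t) t) -> (forall t, S t -> cR S Eh' t) ->
  (forall t, S t -> hnorm H (w t) ^ 2 <= E t) ->
  (forall t, S t -> 1/2 * E t <= Eh t /\ Eh t <= 2 * E t) ->
  (forall t, S t -> Eh' t <= - (mu / 2) * Eh t + gg t) ->
  (forall t, S t ->
     1/2 * (E t / Rpower (hnorm H (u t)) (2 + d)) <= Eh t / Rpower (hnorm H (u t)) (2 + d) /\
     Eh t / Rpower (hnorm H (u t)) (2 + d) <= 2 * (E t / Rpower (hnorm H (u t)) (2 + d))) /\
  exists Gh' : R -> R,
    (forall t, S t -> dR S (fun r => Eh r / Rpower (hnorm H (u r)) (2 + d)) (Gh' t) t) /\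
    (forall t, S t -> cR S Gh' t) /\
    (forall t, S t -> Gh' t <= - (mu / 2) * (Eh t / Rpower (hnorm H (u t)) (2 + d))
         + gg t / Rpower (hnorm H (u t)) (2 + d)
         + (2 + d) * Rpower (hnorm H (u t)) (d / 2) * sqrt (E t / Rpower (hnorm H (u t)) (2 + d))
             * (Eh t / Rpower (hnorm H (u t)) (2 + d))).
Proof.
  intros Hmu Hd Hne Hdu Hcw HdE HcE Hwe Hbd Hineq.
  assert (Hpos : forall t, S t -> 0 < inner H (u t) (u t)).
  { intros t St. destruct (ip_pos H (u t)) as [|e]; auto. exfalso. apply (Hne t St). apply hinner_def. auto. }
  assert (HN : forall t, S t -> 0 < hnorm H (u t)).
  { intros t St. unfold hnorm. apply sqrt_lt_R0. auto. }
  split.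
  { intros t St. pose proof (Rpower_pos (hnorm H (u t)) (2 + d)). destruct (Hbd t St).
    unfold Rdiv. split; rewrite <- ?Rmult_assoc; apply Rmult_le_compat_r; try lra;
    left; apply Rinv_0_lt_compat; auto. }
  set (N := fun r => hnorm H (u r)).
  set (Gh' := fun t => Eh' t * Rpower (N t) (- (2 + d))
     + Eh t * (- (2 + d) * Rpower (N t) (- (4 + d)) * inner H (u t) (w t))).
  exists Gh'.
  assert (HcN : forall t, S t -> cR S N t).
  { intros t St. unfold N, hnorm.
    apply (cR_comp S (fun r => inner H (u r) (u r)) t sqrt (/ (2 * sqrt (inner H (u t) (u t))))).
    apply cH_ip; apply (dH_cH H S u (w t)); auto. apply derivable_pt_lim_sqrt; auto. }
  assert (HcP : forall c t, S t -> cR S (fun r => Rpower (N r) c) t).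
  { intros c t St. apply (cR_comp S N t (fun y => Rpower y c) (c * Rpower (N t) (c - 1))); auto.
    apply derivable_pt_lim_power. apply HN; auto. }
  split; [|split].
  - intros t St.
    assert (Duu : dR S (fun r => inner H (u r) (u r)) (inner H (w t) (u t) + inner H (u t) (w t)) t).
    { apply weak_prod. apply dH_ip; auto. apply (dH_cH H S u (w t)); auto. auto. }
    assert (DN : dR S N (/ (2 * sqrt (inner H (u t) (u t))) * (inner H (w t) (u t) + inner H (u t) (w t))) t).
    { apply (dR_comp S _ _ t sqrt). auto. apply derivable_pt_lim_sqrt; auto. }
    assert (DR : dR S (fun r => Rpower (N r) (- (2 + d)))
       ((- (2 + d) * Rpower (N t) (- (2 + d) - 1)) * (/ (2 * sqrt (inner H (u t) (u t))) * (inner H (w t) (u t) + inner H (u t) (w t)))) t).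
    { apply (dR_comp S N _ t (fun y => Rpower y (- (2 + d)))). auto.
      apply derivable_pt_lim_power. apply HN; auto. }
    assert (DG := dR_mult S Eh _ _ _ t (HdE t St) DR).
    eapply dR_ext; [ | exact St | eapply dR_eq; [ | exact DG ]].
    + intros s Ss. unfold N. simpl. unfold Rdiv. rewrite <- Rpower_Ropp. auto.
    + unfold Gh'. f_equal. f_equal.
      assert (Hsq : sqrt (inner H (u t) (u t)) = N t) by auto.
      rewrite Hsq, (ip_sym H (w t) (u t)).
      assert (Hn := HN t St). fold (N t) in Hn.
      replace (- (2 + d) - 1) with (- (4 + d) + 1) by ring. rewrite Rpower_plus, Rpower_1 by auto.
      field. lra.
  - intros t St. unfold Gh'. apply cR_plus; apply cR_mult; auto.
    + apply (dR_cR S Eh (Eh' t) t); auto.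
    + apply cR_mult; [apply cR_mult|]. apply cR_const. auto.
      apply cH_ip. apply (dH_cH H S u (w t)); auto. auto.
  - intros t St. unfold Gh'. fold (N t).
    assert (Hn := HN t St). fold (N t) in Hn.
    destruct (rp_facts (N t) d Hn) as [P1 [P2 P3]]. rewrite P1, P2, P3.
    set (K := Rpower (N t) (d / 2)). assert (HK : 0 < K) by apply Rpower_pos.
    set (a := hnorm H (w t)). assert (Ha : 0 <= a) by apply hnorm_ge0.
    set (p := inner H (u t) (w t)).
    assert (Hp : - (N t * a) <= p) by (unfold p, N, a; apply CS_ge).
    destruct (Hbd t St) as [B1 B2]. pose proof (Hineq t St) as I1. pose proof (Hwe t St) as W1.
    fold a in W1.
    assert (HE : 0 <= E t) by (pose proof (sqnn a); simpl in W1; lra).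
    assert (HEh : 0 <= Eh t) by lra.
    assert (HNK : 0 < N t * K) by (apply Rmult_lt_0_compat; auto).
    assert (SQ : sqrt (E t / (N t * N t * (K * K))) = sqrt (E t) / (N t * K)).
    { rewrite sqrt_div_alt. f_equal. replace (N t * N t * (K * K)) with ((N t * K) * (N t * K)) by ring.
      apply sqrt_square. lra. apply Rmult_lt_0_compat; [apply Rmult_lt_0_compat|]; auto; apply Rmult_lt_0_compat; auto. }
    rewrite SQ.
    assert (Ha2 : a <= sqrt (E t)).
    { rewrite <- (sqrt_square a) by auto. apply sqrt_le_1_alt. simpl in W1. lra. }
    set (sE := sqrt (E t)) in *.
    set (n := N t) in *.
    assert (T1 : Eh' t * / (n * n * (K * K)) <= (- (mu / 2) * Eh t + gg t) * / (n * n * (K * K))).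
    { apply Rmult_le_compat_r; auto. left. apply Rinv_0_lt_compat. nra. }
    assert (T2 : Eh t * (- (2 + d) * / (n * n * n * n * (K * K)) * p) <=
       (2 + d) * K * (sE / (n * K)) * (Eh t / (n * n * (K * K)))).
    { replace (Eh t * (- (2 + d) * / (n * n * n * n * (K * K)) * p)) with
         ((2 + d) * (Eh t / (n * n * (K * K))) * (- p / (n * n))) by (field; split; lra).
      replace ((2 + d) * K * (sE / (n * K)) * (Eh t / (n * n * (K * K)))) with
         ((2 + d) * (Eh t / (n * n * (K * K))) * (sE / n)) by (field; split; lra).
      apply Rmult_le_compat_l.
      apply Rmult_le_pos. lra. apply div_nonneg; auto. nra.
      apply (Rmult_le_reg_r (n * n)). nra.
      replace (- p / (n * n) * (n * n)) with (- p) by (field; lra).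
      replace (sE / n * (n * n)) with (sE * n) by (field; lra). nra. }
    unfold Rdiv at 2. lra.
Qed.


Lemma ext0 f f' : cR half_line f 0 -> (forall t, t > 0 -> dR TT f (f' t) t) -> cR half_line f' 0 ->
  dR half_line f (f' 0) 0.
Proof.
  intros Cf D Cf' eps He.
  destruct (Cf' eps He) as [eta [Heta P]].
  exists eta; split; auto. intros s Ss Hs. unfold half_line in Ss.
  destruct (Req_dec s 0) as [Hs0|Hs0].
  { subst. replace (f 0 - f 0 - (0 - 0) * f' 0) with 0 by ring. rewrite Rabs_R0.
    pose proof (Rabs_pos (0 - 0)). nra. }
  assert (Hsp : s > 0) by lra. rewrite Rminus_0_r in *. rewrite Rabs_pos_eq in * by lra.
  apply le_eps. intros rho Hrho.
  destruct (Cf (rho / 2) ltac:(lra)) as [e1 [He1 P1]].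
  set (c := Rabs (f' 0) + 1). assert (Hc : c > 0) by (unfold c; pose proof (Rabs_pos (f' 0)); lra).
  set (a := Rmin (s / 2) (Rmin (e1 / 2) (rho / (2 * c)))).
  assert (Ha : 0 < a) by (unfold a; repeat apply Rmin_pos; try lra; apply Rdiv_lt_0_compat; lra).
  assert (Has : a <= s / 2) by apply Rmin_l.
  assert (Hae : a <= e1 / 2) by (eapply Rle_trans; [apply Rmin_r|apply Rmin_l]).
  assert (Har : a <= rho / (2 * c)) by (eapply Rle_trans; [apply Rmin_r|apply Rmin_r]).
  pose proof (mvt_abs f f' a s (f' 0) eps) as MV.
  assert (M1 : forall r, Rmin a s <= r <= Rmax a s -> derivable_pt_lim f r (f' r)).
  { intros r Hr. apply minmax in Hr. apply dR_to_lim. apply D. lra. }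
  assert (M2 : forall r, Rmin a s <= r <= Rmax a s -> Rabs (f' r - f' 0) <= eps).
  { intros r Hr. apply minmax in Hr. left. apply P. unfold half_line; lra. rewrite Rminus_0_r, Rabs_pos_eq; lra. }
  specialize (MV M1 M2). rewrite (Rabs_pos_eq (s - a)) in MV by lra.
  assert (Q1 : Rabs (f a - f 0) < rho / 2).
  { apply P1. unfold half_line; lra. rewrite Rminus_0_r, Rabs_pos_eq; lra. }
  assert (Q2 : Rabs (a * f' 0) <= rho / 2).
  { rewrite Rabs_mult, (Rabs_pos_eq a) by lra.
    apply Rle_trans with (rho / (2 * c) * c).
    apply Rmult_le_compat; try lra. apply Rabs_pos. unfold c; lra.
    right. field. lra. }
  replace (f s - f 0 - s * f' 0) with ((f s - f a - (s - a) * f' 0) + (f a - f 0) - a * f' 0) by ring.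
  eapply Rle_trans. apply Rabs_triang. rewrite Rabs_Ropp.
  eapply Rle_trans. apply Rplus_le_compat_r. apply Rabs_triang. assert (0 <= eps * a) by (apply Rmult_le_pos; lra). assert (Rabs s = s) by (apply Rabs_pos_eq; lra). rewrite H0. lra.
Qed.

Lemma dH_Q (H : Hilbert) DA A Q S (u : R -> H) du t :
  is_orth_proj H (orth H (kerA H DA A)) Q -> dH H S u du t -> dH H S (fun r => Q (u r)) (Q du) t.
Proof.
  intros HQ D eps He. destruct (D eps He) as [eta [Heta P]]. exists eta; split; auto.
  intros s Ss Hs. eapply Rle_trans. apply (Q_comb H DA A Q HQ). apply P; auto.
Qed.

Lemma cH_Q (H : Hilbert) DA A Q S (u : R -> H) t :
  is_orth_proj H (orth H (kerA H DA A)) Q -> cH H S u t -> cH H S (fun r => Q (u r)) t.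
Proof.
  intros HQ D eps He. destruct (D eps He) as [eta [Heta P]]. exists eta; split; auto.
  intros s Ss Hs. rewrite <- (hnorm_sub_scal0 H _ (Q (u t))).
  eapply Rle_lt_trans. apply (Q_comb H DA A Q HQ). rewrite hnorm_sub_scal0. apply P; auto.
Qed.

Theorem lemma4p2
  (H : Hilbert)
  (DA : H -> Prop) (A : H -> H)
  (DB : H -> Prop) (B : H -> H)
  (Q : H -> H) (delta nu : R)
  (g u u' : R -> H) :
  sa_nonneg_op H DA A ->
  is_sqrt_op H DA A DB B ->
  is_orth_proj H (orth H (kerA H DA A)) Q ->
  0 < delta ->
  0 < nu ->
  (forall x, DB x -> hnorm H (Q x) ^ 2 <= / nu * hnorm H (B x) ^ 2) ->
  hcont_on H half_line g ->
  weak_solution H DB B delta g u u' ->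
  let mu := mu_const nu delta in
  let E := energy H B u u' in
  let Eh := energy_hat H B Q mu u u' in
  (* (1) *)
  ((forall t, 0 <= t -> 1/2 * E t <= Eh t /\ Eh t <= 2 * E t) /\
   exists Eh' : R -> R,
     C1_on half_line Eh Eh' /\
     (forall t, 0 <= t ->
        Eh' t <= - (mu / 2) * Eh t + 2 / delta * hnorm H (g t) ^ 2)) /\
  (* (2) *)
  (forall (a : R) (b : option R) (d : R),
     0 <= a -> 0 <= d ->
     (forall t, in_interval a b t -> u t <> h0 H) ->
     (forall t, in_interval a b t ->
        1/2 * Gd H B d u u' t <= Gd_hat H B Q mu d u u' t /\
        Gd_hat H B Q mu d u u' t <= 2 * Gd H B d u u' t) /\
     exists Gh' : R -> R,
       C1_on (in_interval a b) (Gd_hat H B Q mu d u u') Gh' /\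
       (forall t, in_interval a b t ->
          Gh' t <= - (mu / 2) * Gd_hat H B Q mu d u u' t
                   + 2 / delta * hnorm H (g t) ^ 2 / Rpower (hnorm H (u t)) (2 + d)
                   + (2 + d) * Rpower (hnorm H (u t)) (d / 2)
                       * sqrt (Gd H B d u u' t) * Gd_hat H B Q mu d u u' t)).
Proof.
  intros Hsa Hsq HQ Hdel Hnu Hpc Hgc Hws mu E Eh.
  assert (Hmu : 0 < mu /\ mu <= 1/2 /\ mu <= nu / 2 /\ mu <= delta / 2 /\ 5 * mu * delta <= nu)
    by (unfold mu, mu_const; apply mu_facts; auto).
  destruct Hmu as (Hm0 & Hm1 & Hm2 & Hm3 & Hm4).
  pose proof Hws as Hws'. destruct Hws' as (Hu & Hcu & HcU & Hdu & Hcw & Hweak).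
  assert (HE : EH H DB B delta g u u').
  { repeat split.
    - intros t Ht. apply Hu. unfold half_line; lra.
    - intros t Ht. apply (dH_loc H half_line). apply nbhd_half; auto. exact (Hdu t ltac:(unfold half_line; lra)).
    - intros t Ht. apply (cH_loc H half_line). apply nbhd_half; auto. exact (Hcw t ltac:(unfold half_line; lra)).
    - intros t Ht. apply (cH_loc H half_line). apply nbhd_half; auto. exact (HcU t ltac:(unfold half_line; lra)).
    - intros t Ht. apply (cH_loc H half_line). apply nbhd_half; auto. exact (Hgc t ltac:(unfold half_line; lra)).
    - intros v Hv t Ht. apply (dR_loc half_line). apply nbhd_half; auto. exact (Hweak v Hv t ltac:(unfold half_line; lra)). }
  assert (Cw : forall t, 0 <= t -> cH H half_line u' t) by (intros t Ht; exact (Hcw t Ht)).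
  assert (CU : forall t, 0 <= t -> cH H half_line (fun r => B (u r)) t) by (intros t Ht; exact (HcU t Ht)).
  assert (Cu : forall t, 0 <= t -> cH H half_line u t) by (intros t Ht; exact (Hcu t Ht)).
  assert (Cg : forall t, 0 <= t -> cH H half_line g t) by (intros t Ht; exact (Hgc t Ht)).
  assert (Du : forall t, 0 <= t -> dH H half_line u (u' t) t) by (intros t Ht; exact (Hdu t Ht)).
  set (DE := fun t => 2 * F0 H delta g u' t).
  assert (Eeq : forall t, E t = inner H (u' t) (u' t) + inner H (B (u t)) (B (u t))).
  { intros t. unfold E, energy. rewrite !hnorm_sq. auto. }
  assert (CE : forall t, 0 <= t -> cR half_line E t).
  { intros t Ht. eapply cR_ext; [intros; symmetry; apply Eeq | exact Ht | ].
    apply cR_plus; apply cH_ip; auto. }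
  assert (CDE : forall t, 0 <= t -> cR half_line DE t).
  { intros t Ht. unfold DE, F0. apply cR_mult. apply cR_const.
    apply cR_minus. apply cH_ip; auto. apply cR_mult. apply cR_const. apply cH_ip; auto. }
  assert (DEt : forall t, t > 0 -> dR TT E (DE t) t).
  { intros t Ht. eapply dR_ext; [ | exact I | apply dR_scal; apply (E2_deriv H DB B delta g u u' HE Hdel t Ht)].
    intros s _. rewrite Eeq. unfold E2. field. }
  assert (DEh : forall t, 0 <= t -> dR half_line E (DE t) t).
  { intros t Ht. destruct (Req_dec t 0) as [->|Hn0].
    - apply ext0. apply CE; lra. exact DEt. apply CDE; lra.
    - apply (dR_sub TT). intros; exact I. apply DEt. lra. }
  set (DP := fun t => inner H (g t) (Q (u t)) - 2 * delta * inner H (u' t) (Q (u t))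
                 - inner H (B (u t)) (B (u t)) + inner H (u' t) (Q (u' t))).
  assert (DPh : forall t, 0 <= t -> dR half_line (fun r => inner H (u' r) (Q (u r))) (DP t) t).
  { intros t Ht.
    destruct (Q_B H DA A DB B Q Hsa Hsq HQ (u t) (Hu t Ht)) as [DQ BQ].
    assert (W := weak_prod H half_line u' (fun r => Q (u r)) _ (Q (u' t)) t
       (Hweak (Q (u t)) DQ t Ht) (Cw t Ht) (dH_Q H DA A Q half_line u (u' t) t HQ (Du t Ht))).
    eapply dR_eq; [ | exact W]. unfold DP. rewrite BQ. ring. }
  assert (CDP : forall t, 0 <= t -> cR half_line DP t).
  { intros t Ht. unfold DP.
    assert (CQu : cH H half_line (fun r => Q (u r)) t) by (apply (cH_Q H DA A Q); auto).
    assert (CQw : cH H half_line (fun r => Q (u' r)) t) by (apply (cH_Q H DA A Q); auto).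
    apply cR_plus. apply cR_minus. apply cR_minus. apply cH_ip; auto.
    apply cR_mult. apply cR_const. apply cH_ip; auto. apply cH_ip; auto. apply cH_ip; auto. }
  set (Eh' := fun t => DE t + 2 * mu * DP t).
  assert (Eheq : forall t, Eh t = E t + 2 * mu * inner H (u' t) (Q (u t))) by (intros; auto).
  assert (Bounds : forall t, 0 <= t -> 1/2 * E t <= Eh t /\ Eh t <= 2 * E t).
  { intros t Ht. rewrite Eheq, Eeq, <- !hnorm_sqm.
    pose proof (Hpc (u t) (Hu t Ht)) as Pc.
    apply (ineq_bounds mu nu _ _ (hnorm H (Q (u t)))); auto; try apply hnorm_ge0.
    apply (Rmult_le_compat_l nu) in Pc; [|lra]. simpl in Pc.
    replace (nu * (/ nu * (hnorm H (B (u t)) * (hnorm H (B (u t)) * 1)))) with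
      (hnorm H (B (u t)) * hnorm H (B (u t))) in Pc by (field; lra). lra.
    apply CS. }
  assert (Ineq : forall t, 0 <= t -> Eh' t <= - (mu / 2) * Eh t + 2 / delta * hnorm H (g t) ^ 2).
  { intros t Ht. unfold Eh', DE, DP, F0. rewrite Eheq, Eeq.
    destruct (Q_norm H DA A Q HQ (u' t)) as [Qn1 Qn2].
    pose proof (Hpc (u t) (Hu t Ht)) as Pc.
    pose proof (ineq_main mu nu delta (hnorm H (u' t)) (hnorm H (B (u t))) (hnorm H (Q (u t))) (hnorm H (g t))
       (inner H (g t) (u' t)) (inner H (g t) (Q (u t))) (inner H (u' t) (Q (u t))) (inner H (u' t) (Q (u' t)))
       Hdel Hnu Hm0 Hm1 Hm2 Hm3 Hm4) as IM.
    rewrite <- !hnorm_sqm.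
    assert (Pc' : nu * (hnorm H (Q (u t)) * hnorm H (Q (u t))) <= hnorm H (B (u t)) * hnorm H (B (u t))).
    { apply (Rmult_le_compat_l nu) in Pc; [|lra]. simpl in Pc.
      replace (nu * (/ nu * (hnorm H (B (u t)) * (hnorm H (B (u t)) * 1)))) with
        (hnorm H (B (u t)) * hnorm H (B (u t))) in Pc by (field; lra). simpl. lra. }
    assert (0 <= inner H (u' t) (Q (u' t))) by (rewrite Qn1; apply ip_pos).
    rewrite <- !hnorm_sqm in Qn2. rewrite <- hnorm_sqm in Qn1.
    specialize (IM (hnorm_ge0 _ _) (hnorm_ge0 _ _) (hnorm_ge0 _ _) (hnorm_ge0 _ _) Pc'
       (ltac:(apply CS)) (ltac:(apply CS)) (ltac:(apply CS)) ltac:(split; lra)).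
    simpl. lra. }
  assert (DEhall : forall t, 0 <= t -> dR half_line Eh (Eh' t) t).
  { intros t Ht. unfold Eh'. eapply dR_ext; [ intros s _; symmetry; apply Eheq | exact Ht | ].
    apply dR_plus. apply DEh; auto. apply dR_scal. apply DPh; auto. }
  assert (CEh' : forall t, 0 <= t -> cR half_line Eh' t).
  { intros t Ht. unfold Eh'. apply cR_plus. apply CDE; auto. apply cR_mult. apply cR_const. apply CDP; auto. }
  split.
  - split. exact Bounds. exists Eh'. split. split. exact DEhall. exact CEh'. exact Ineq.
  - intros a b d Ha Hd Hne.
    assert (Sh : forall t, in_interval a b t -> half_line t) by (intros t [Ht _]; unfold half_line; lra).
    destruct (part2 H (in_interval a b) u u' E Eh Eh' (fun t => 2 / delta * hnorm H (g t) ^ 2) mu d Hm0 Hd Hne)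
      as [PB [Gh' [PD [PC PI]]]].
    + intros t St. apply (dH_sub H half_line); auto. exact (Hdu t (Sh t St)).
    + intros t St. apply (cH_sub H half_line); auto. exact (Hcw t (Sh t St)).
    + intros t St. apply (dR_sub half_line); auto. apply DEhall. apply Sh; auto.
    + intros t St. apply (cR_sub half_line); auto. apply CEh'. apply Sh; auto.
    + intros t St. unfold E, energy. pose proof (pow2_ge_0 (hnorm H (B (u t)))). lra.
    + intros t St. apply Bounds. apply Sh; auto.
    + intros t St. apply Ineq. apply Sh; auto.
    + split. exact PB. exists Gh'. split. split. exact PD. exact PC. exact PI.
Qed.
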